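(* Let $k\ge 3$ be an integer and let $\Omega\subset\mathbb{R}^4$ be a domain with smooth boundary and outer unit normal $\nu$. The boundary value problem for $\mathbb{C}^{2k}$-valued $u$: $\square_1^{(k)}u=f$ on $\Omega$, $D_0^{(k)*}(\nu)u|_{\partial\Omega}=0$, $D_1^{(k)*}(\nu)D_1^{(k)}u|_{\partial\Omega}=0$, is regular (satisfies the Shapiro–Lopatinskii condition).
   Context: Coordinates $x=(x_0,\dots,x_3)$; $\partial_{z_0}=\partial_{x_0}-i\partial_{x_1}$, $\partial_{\bar z_0}=\partial_{x_0}+i\partial_{x_1}$, $\partial_{z_1}=\partial_{x_2}-i\partial_{x_3}$, $\partial_{\bar z_1}=\partial_{x_2}+i\partial_{x_3}$. $D_0^{(k)}(\phi_0,\dots,\phi_k)=(\psi_0,\dots,\psi_{2k-1})$ with $\psi_{2j}=-\partial_{\bar z_1}\phi_j-\partial_{\bar z_0}\phi_{j+1}$, $\psi_{2j+1}=\partial_{z_0}\phi_j-\partial_{z_1}\phi_{j+1}$ ($0\le j\le k-1$); $(D_1^{(k)}\psi)_j=-\partial_{z_0}\psi_{2j}-\partial_{\bar z_1}\psi_{2j+1}+\partial_{z_1}\psi_{2j+2}-\partial_{\bar z_0}\psi_{2j+3}$ ($0\le j\le k-2$). For $D=\sum_jA_j\partial_{x_j}$ with constant matrices, $D^*=-\sum_j\overline{A_j}^{\,t}\partial_{x_j}$ and $D(\nu)=\sum_jA_j\nu_j$. $\square_1^{(k)}=D_0^{(k)}D_0^{(k)*}+D_1^{(k)*}D_1^{(k)}$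 (an elliptic second-order operator). Regularity (Shapiro–Lopatinskii): for each $x\in\partial\Omega$ and nonzero $\xi\in\mathbb{R}^4$ with $\xi\perp\nu_x$, the only bounded solution $u\in C^\infty([0,\infty),\mathbb{C}^{2k})$ of $\square_1^{(k)}(i\xi+n\partial_t)u(t)=0$ with $D_0^{(k)*}(n)u(0)=0$ and $D_1^{(k)*}(n)D_1^{(k)}(i\xi+n\partial_t)u(0)=0$ is $u=0$, where $n$ is the inner unit normal at $x$ and $Q(i\xi+n\partial_t)$ means replacing each $\partial_{x_l}$ by $i\xi_l+n_l\partial_t$. *)

(* Defs.v *)
From Stdlib Require Import Reals.
From Coquelicot Require Import Coquelicot.
Open Scope R_scope.

(* A minimal "C-module" structure, used to evaluate the constant-coefficient
   operators either on constant vectors (S = C) or on functions of t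
   (S = R -> C). *)
Record CMod (S : Type) := {
  zeroS : S;
  addS : S -> S -> S;
  smulS : C -> S -> S }.
Arguments zeroS {S} _.
Arguments addS {S} _ _ _.
Arguments smulS {S} _ _ _.

Section Ops.
Variable S : Type.
Variable M : CMod S.
Definition negS (w : S) : S := smulS M (RtoC (-1)) w.
Definition subS (a b : S) : S := addS M a (negS b).
Fixpoint sumS (n : nat) (f : nat -> S) : S :=
  match n with O => zeroS M | Datatypes.S n' => addS M (sumS n' f) (f n') end.

(* d l plays the role of the partial derivative d/dx_l, l = 0..3 *)
Variable d : nat -> S -> S.
Definition dz0  (w : S) : S := subS (d 0 w) (smulS M Ci (d 1 w)).
Definition dzb0 (w : S) : S := addS M (d 0 w) (smulS M Ci (d 1 w)).
Definition dz1  (w : S) : S := subS (d 2 w) (smulS M Ci (d 3 w)).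
Definition dzb1 (w : S) : S := addS M (d 2 w) (smulS M Ci (d 3 w)).

(* D_0^{(k)} : (phi_0..phi_k) |-> (psi_0..psi_{2k-1}); component m = 2j or 2j+1 *)
Definition D0 (phi : nat -> S) (m : nat) : S :=
  let j := Nat.div2 m in
  if Nat.odd m then subS (dz0 (phi j)) (dz1 (phi (j + 1)%nat))
  else subS (negS (dzb1 (phi j))) (dzb0 (phi (j + 1)%nat)).

(* D_1^{(k)} : (psi_0..psi_{2k-1}) |-> components j = 0..k-2 *)
Definition D1 (psi : nat -> S) (j : nat) : S :=
  addS M (subS (subS (negS (dz0 (psi (2 * j)%nat))) (dzb1 (psi (2 * j + 1)%nat)))
               (negS (dz1 (psi (2 * j + 2)%nat))))
         (negS (dzb0 (psi (2 * j + 3)%nat))).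
End Ops.

Definition CM : CMod C := {| zeroS := RtoC 0; addS := Cplus; smulS := Cmult |}.
Definition FM : CMod (R -> C) :=
  {| zeroS := fun _ => RtoC 0; addS := fun f g t => Cplus (f t) (g t);
     smulS := fun a f t => Cmult a (f t) |}.

(* "d/dx_l" := unit selector: used to read off the coefficient matrices A_l *)
Definition dsel (l : nat) : nat -> C -> C :=
  fun l' w => if Nat.eqb l' l then w else RtoC 0.
Definition evec (c : nat) : nat -> C :=
  fun j => if Nat.eqb j c then RtoC 1 else RtoC 0.

(* coefficient matrices: D_0 = sum_l A0_l d/dx_l, (A0_l)_{r c}; likewise D_1 *)
Definition A0 (l r c : nat) : C := D0 C CM (dsel l) (evec c) r.
Definition A1 (l r c : nat) : C := D1 C CM (dsel l) (evec c) r.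

Definition D0star {S} (M : CMod S) (k : nat) (d : nat -> S -> S) (psi : nat -> S)
  (c : nat) : S :=
  negS S M (sumS S M 4 (fun l => sumS S M (2 * k) (fun r =>
     smulS M (Cconj (A0 l r c)) (d l (psi r))))).
Definition D1star {S} (M : CMod S) (k : nat) (d : nat -> S -> S) (phi : nat -> S)
  (c : nat) : S :=
  negS S M (sumS S M 4 (fun l => sumS S M (k - 1) (fun r =>
     smulS M (Cconj (A1 l r c)) (d l (phi r))))).

Definition box1 {S} (M : CMod S) (k : nat) (d : nat -> S -> S) (u : nat -> S)
  (m : nat) : S :=
  addS M (D0 S M d (D0star M k d u) m) (D1star M k d (D1 S M d u) m).

Definition Cderive (w : R -> C) (t : R) : C :=
  (Derive (fun s => fst (w s)) t, Derive (fun s => snd (w s)) t).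

(* symbol substitution d/dx_l |-> i xi_l + n_l d/dt, acting on functions of t *)
Definition dtan (n xi : nat -> R) : nat -> (R -> C) -> (R -> C) :=
  fun l w t => Cplus (Cmult (Cmult Ci (RtoC (xi l))) (w t))
                     (Cmult (RtoC (n l)) (Cderive w t)).
(* substitution d/dx_l |-> n_l, giving the principal symbol D(n) *)
Definition dnu (n : nat -> R) : nat -> C -> C :=
  fun l w => Cmult (RtoC (n l)) w.

Definition smoothC (w : R -> C) : Prop :=
  forall (p : nat) (t : R),
    ex_derive_n (fun s => fst (w s)) p t /\ ex_derive_n (fun s => snd (w s)) p t.

Definition dot4 (a b : nat -> R) : R := a 0%nat * b 0%nat + a 1%nat * b 1%nat
  + a 2%nat * b 2%nat + a 3%nat * b 3%nat.

(* Shapiro-Lopatinskii condition at a boundary point with inner unit normal n,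
   for the tangential covector xi *)
Definition SL_condition (k : nat) (n xi : nat -> R) : Prop :=
  forall u : nat -> R -> C,
    (forall m, (m < 2 * k)%nat -> smoothC (u m)) ->
    (exists B : R, forall m t, (m < 2 * k)%nat -> 0 <= t -> Cmod (u m t) <= B) ->
    (forall m t, (m < 2 * k)%nat -> 0 <= t -> box1 FM k (dtan n xi) u m t = RtoC 0) ->
    (forall c, (c <= k)%nat -> D0star CM k (dnu n) (fun m => u m 0) c = RtoC 0) ->
    (forall c, (c < 2 * k)%nat ->
       D1star CM k (dnu n) (fun j => D1 (R -> C) FM (dtan n xi) u j 0) c = RtoC 0) ->
    forall m t, (m < 2 * k)%nat -> 0 <= t -> u m t = RtoC 0.

(* Main.v *)
Require Import Defs.
From Stdlib Require Import Reals Lra Lia FunctionalExtensionality.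
From Coquelicot Require Import Coquelicot.
Open Scope R_scope.


Definition Sm (f : R -> R) : Prop := forall p t, ex_derive_n f p t.

Lemma Sm_loc (f : R -> R) (n : nat) (x : R) : Sm f ->
  locally x (fun y : R_UniformSpace => forall k, (k <= n)%nat -> ex_derive_n f k y).
Proof. intros H. apply filter_forall. intros y kk _. apply H. Qed.

Lemma Sm_ex (f : R -> R) t : Sm f -> ex_derive f t.
Proof. intros H. exact (H 1%nat t). Qed.

Lemma Sm_plus f g : Sm f -> Sm g -> Sm (fun t => f t + g t).
Proof. intros Hf Hg p t. apply ex_derive_n_plus; apply Sm_loc; auto. Qed.
Lemma Sm_minus f g : Sm f -> Sm g -> Sm (fun t => f t - g t).
Proof. intros Hf Hg p t. apply ex_derive_n_minus; apply Sm_loc; auto. Qed.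
Lemma Sm_scal f a : Sm f -> Sm (fun t => a * f t).
Proof. intros Hf p t. apply ex_derive_n_scal_l; auto. Qed.
Lemma Sm_const a : Sm (fun _ => a).
Proof. intros p t. apply ex_derive_n_const. Qed.

Lemma Derive_n_Derive f p t : Derive_n (Derive f) p t = Derive_n f (S p) t.
Proof.
  change (Derive f) with (Derive_n f 1).
  rewrite Derive_n_comp. f_equal. lia.
Qed.

Lemma Sm_Derive f : Sm f -> Sm (Derive f).
Proof.
  intros Hf p t. destruct p as [|p]. exact I.
  simpl. apply ex_derive_ext with (f := Derive_n f (S p)).
  intros s. now rewrite Derive_n_Derive.
  exact (Hf (S (S p)) t).
Qed.

Lemma Sm_ext f g : (forall t, f t = g t) -> Sm f -> Sm g.
Proof. intros E H p t. apply ex_derive_n_ext with f; auto. Qed.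

Lemma smoothC_Sm w : smoothC w <-> Sm (fun s => fst (w s)) /\ Sm (fun s => snd (w s)).
Proof.
  split. intros H. split; intros p t; apply H.
  intros [H1 H2] p t. split; auto.
Qed.

Definition jet (w : R -> C) (t : R) : nat -> C :=
  fun p => (Derive_n (fun s => fst (w s)) p t, Derive_n (fun s => snd (w s)) p t).

Definition JM : CMod (nat -> C) :=
  {| zeroS := fun _ => RtoC 0; addS := fun f g p => Cplus (f p) (g p);
     smulS := fun a f p => Cmult a (f p) |}.

Definition dj (n xi : nat -> R) : nat -> (nat -> C) -> (nat -> C) :=
  fun l J p => Cplus (Cmult (Cmult Ci (RtoC (xi l))) (J p))
                     (Cmult (RtoC (n l)) (J (S p))).

Lemma smoothC_add f g : smoothC f -> smoothC g -> smoothC (addS FM f g).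
Proof.
  intros Hf Hg. apply smoothC_Sm in Hf as [F1 F2]. apply smoothC_Sm in Hg as [G1 G2].
  apply smoothC_Sm; simpl; split; apply Sm_plus; auto.
Qed.

Lemma smoothC_mul a f : smoothC f -> smoothC (smulS FM a f).
Proof.
  intros Hf. apply smoothC_Sm in Hf as [F1 F2].
  apply smoothC_Sm; simpl; split.
  apply Sm_minus; apply Sm_scal; auto.
  apply Sm_plus; apply Sm_scal; auto.
Qed.

Lemma smoothC_zero : smoothC (zeroS FM).
Proof. apply smoothC_Sm; simpl; split; apply Sm_const. Qed.

Lemma smoothC_deriv w : smoothC w -> smoothC (Cderive w).
Proof.
  intros Hw. apply smoothC_Sm in Hw as [F1 F2].
  apply smoothC_Sm; unfold Cderive; simpl; split; apply Sm_Derive; auto.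
Qed.

Lemma jet_add f g t : smoothC f -> smoothC g -> jet (addS FM f g) t = addS JM (jet f t) (jet g t).
Proof.
  intros Hf Hg. apply smoothC_Sm in Hf as [F1 F2]. apply smoothC_Sm in Hg as [G1 G2].
  apply functional_extensionality; intros p. unfold jet; simpl.
  rewrite !Derive_n_plus by (apply Sm_loc; auto). reflexivity.
Qed.

Lemma jet_mul a f t : smoothC f -> jet (smulS FM a f) t = smulS JM a (jet f t).
Proof.
  intros Hf. apply smoothC_Sm in Hf as [F1 F2].
  apply functional_extensionality; intros p. unfold jet; simpl.
  rewrite Derive_n_minus by (apply Sm_loc; apply Sm_scal; auto).
  rewrite Derive_n_plus by (apply Sm_loc; apply Sm_scal; auto).
  rewrite !Derive_n_scal_l. reflexivity.
Qed.

Lemma jet_zero t : jet (zeroS FM) t = zeroS JM.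
Proof.
  apply functional_extensionality; intros p. unfold jet; simpl.
  destruct p. reflexivity. rewrite Derive_n_const. reflexivity.
Qed.

Lemma jet_deriv w t : jet (Cderive w) t = fun p => jet w t (S p).
Proof.
  apply functional_extensionality; intros p. unfold jet, Cderive; simpl.
  rewrite !Derive_n_Derive. reflexivity.
Qed.

Lemma dtan_eq n xi l w : dtan n xi l w =
  addS FM (smulS FM (Cmult Ci (RtoC (xi l))) w) (smulS FM (RtoC (n l)) (Cderive w)).
Proof. reflexivity. Qed.

Lemma smoothC_dtan n xi l w : smoothC w -> smoothC (dtan n xi l w).
Proof.
  intros H. rewrite dtan_eq. apply smoothC_add; apply smoothC_mul; auto.
  now apply smoothC_deriv.
Qed.

Lemma jet_dtan n xi l w t : smoothC w -> jet (dtan n xi l w) t = dj n xi l (jet w t).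
Proof.
  intros H. rewrite dtan_eq. rewrite jet_add.
  rewrite !jet_mul, jet_deriv; auto. now apply smoothC_deriv.
  apply smoothC_mul; auto. apply smoothC_mul; auto. now apply smoothC_deriv.
Qed.


Lemma smoothC_neg f : smoothC f -> smoothC (negS _ FM f).
Proof. intros; now apply smoothC_mul. Qed.
Lemma jet_neg f t : smoothC f -> jet (negS _ FM f) t = negS _ JM (jet f t).
Proof. intros; unfold negS; now rewrite jet_mul. Qed.
Lemma smoothC_sub f g : smoothC f -> smoothC g -> smoothC (subS _ FM f g).
Proof. intros; unfold subS; apply smoothC_add; auto; now apply smoothC_neg. Qed.
Lemma jet_sub f g t : smoothC f -> smoothC g -> jet (subS _ FM f g) t = subS _ JM (jet f t) (jet g t).
Proof. intros; unfold subS; rewrite jet_add, jet_neg; auto. now apply smoothC_neg. Qed.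

Lemma sumS_S {S} (M : CMod S) N f : sumS S M (Datatypes.S N) f = addS M (sumS S M N f) (f N).
Proof. reflexivity. Qed.
Lemma sumS_0 {S} (M : CMod S) f : sumS S M 0 f = zeroS M.
Proof. reflexivity. Qed.

Lemma smoothC_sum N F : (forall r, (r < N)%nat -> smoothC (F r)) -> smoothC (sumS _ FM N F).
Proof.
  induction N; intros H. apply smoothC_zero. rewrite sumS_S.
  apply smoothC_add; auto.
Qed.
Lemma jet_sum N F t : (forall r, (r < N)%nat -> smoothC (F r)) ->
  jet (sumS _ FM N F) t = sumS _ JM N (fun r => jet (F r) t).
Proof.
  induction N; intros H. apply jet_zero. rewrite !sumS_S.
  rewrite jet_add; auto. rewrite IHN; auto. apply smoothC_sum; auto.
Qed.

Section Z.
Variables (n xi : nat -> R) (t : R).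
Let d := dtan n xi.
Let e := dj n xi.

Lemma hom_dz w : smoothC w ->
  (smoothC (dz0 _ FM d w) /\ jet (dz0 _ FM d w) t = dz0 _ JM e (jet w t)) /\
  (smoothC (dzb0 _ FM d w) /\ jet (dzb0 _ FM d w) t = dzb0 _ JM e (jet w t)) /\
  (smoothC (dz1 _ FM d w) /\ jet (dz1 _ FM d w) t = dz1 _ JM e (jet w t)) /\
  (smoothC (dzb1 _ FM d w) /\ jet (dzb1 _ FM d w) t = dzb1 _ JM e (jet w t)).
Proof.
  intros H.
  assert (S0 : forall l, smoothC (d l w)) by (intros; now apply smoothC_dtan).
  assert (J0 : forall l, jet (d l w) t = e l (jet w t)) by (intros; now apply jet_dtan).
  assert (SM : forall l, smoothC (smulS FM Ci (d l w))) by (intros; apply smoothC_mul; auto).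
  unfold dz0, dzb0, dz1, dzb1.
  split; [split|split; [split|split; [split|split]]].
  - apply smoothC_sub; auto.
  - rewrite jet_sub, jet_mul, !J0; auto.
  - apply smoothC_add; auto.
  - rewrite jet_add, jet_mul, !J0; auto.
  - apply smoothC_sub; auto.
  - rewrite jet_sub, jet_mul, !J0; auto.
  - apply smoothC_add; auto.
  - rewrite jet_add, jet_mul, !J0; auto.
Qed.

Lemma hom_D0 phi m : (forall r, smoothC (phi r)) ->
  smoothC (D0 _ FM d phi m) /\ jet (D0 _ FM d phi m) t = D0 _ JM e (fun r => jet (phi r) t) m.
Proof.
  intros H. unfold D0. destruct (Nat.odd m).
  - destruct (hom_dz _ (H (Nat.div2 m))) as [[A1 A2] _].
    destruct (hom_dz _ (H (Nat.div2 m + 1)%nat)) as [_ [_ [[B1 B2] _]]].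
    split. apply smoothC_sub; auto. rewrite jet_sub, A2, B2; auto.
  - destruct (hom_dz _ (H (Nat.div2 m))) as [_ [_ [_ [A1 A2]]]].
    destruct (hom_dz _ (H (Nat.div2 m + 1)%nat)) as [_ [[B1 B2] _]].
    split. apply smoothC_sub; auto. apply smoothC_neg; auto.
    rewrite jet_sub, jet_neg, A2, B2; auto. apply smoothC_neg; auto.
Qed.

Lemma hom_D1 psi j : (forall r, smoothC (psi r)) ->
  smoothC (D1 _ FM d psi j) /\ jet (D1 _ FM d psi j) t = D1 _ JM e (fun r => jet (psi r) t) j.
Proof.
  intros H. unfold D1.
  destruct (hom_dz _ (H (2 * j)%nat)) as [[A1 A2] _].
  destruct (hom_dz _ (H (2 * j + 1)%nat)) as [_ [_ [_ [B1 B2]]]].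
  destruct (hom_dz _ (H (2 * j + 2)%nat)) as [_ [_ [[C1 C2] _]]].
  destruct (hom_dz _ (H (2 * j + 3)%nat)) as [_ [[D1' D2] _]].
  assert (N1 : smoothC (negS _ FM (dz0 _ FM d (psi (2 * j)%nat)))) by (apply smoothC_neg; auto).
  assert (N2 : smoothC (negS _ FM (dz1 _ FM d (psi (2 * j + 2)%nat)))) by (apply smoothC_neg; auto).
  assert (N3 : smoothC (negS _ FM (dzb0 _ FM d (psi (2 * j + 3)%nat)))) by (apply smoothC_neg; auto).
  assert (M1 : smoothC (subS _ FM (negS _ FM (dz0 _ FM d (psi (2 * j)%nat))) (dzb1 _ FM d (psi (2 * j + 1)%nat)))) by (apply smoothC_sub; auto).
  assert (M2 : smoothC (subS _ FM (subS _ FM (negS _ FM (dz0 _ FM d (psi (2 * j)%nat))) (dzb1 _ FM d (psi (2 * j + 1)%nat))) (negS _ FM (dz1 _ FM d (psi (2 * j + 2)%nat))))) by (apply smoothC_sub; auto).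
  split. apply smoothC_add; auto.
  rewrite jet_add by auto. rewrite jet_sub by auto. rewrite jet_sub by auto.
  rewrite !jet_neg by auto. rewrite A2, B2, C2, D2. reflexivity.
Qed.

Lemma hom_D0star k u c : (forall r, smoothC (u r)) ->
  smoothC (D0star FM k d u c) /\ jet (D0star FM k d u c) t = D0star JM k e (fun r => jet (u r) t) c.
Proof.
  intros H. unfold D0star.
  assert (Hs : forall l r, smoothC (smulS FM (Cconj (A0 l r c)) (d l (u r))))
    by (intros; apply smoothC_mul, smoothC_dtan; auto).
  split. apply smoothC_neg, smoothC_sum; intros; apply smoothC_sum; auto.
  rewrite jet_neg by (apply smoothC_sum; intros; apply smoothC_sum; auto).
  f_equal. rewrite jet_sum by (intros; apply smoothC_sum; auto).
  f_equal. apply functional_extensionality; intros l.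
  rewrite jet_sum by auto. f_equal. apply functional_extensionality; intros r.
  rewrite jet_mul by (apply smoothC_dtan; auto). unfold d, e. rewrite jet_dtan; auto.
Qed.

Lemma hom_D1star k phi c : (forall r, smoothC (phi r)) ->
  smoothC (D1star FM k d phi c) /\ jet (D1star FM k d phi c) t = D1star JM k e (fun r => jet (phi r) t) c.
Proof.
  intros H. unfold D1star.
  assert (Hs : forall l r, smoothC (smulS FM (Cconj (Defs.A1 l r c)) (d l (phi r))))
    by (intros; apply smoothC_mul, smoothC_dtan; auto).
  split. apply smoothC_neg, smoothC_sum; intros; apply smoothC_sum; auto.
  rewrite jet_neg by (apply smoothC_sum; intros; apply smoothC_sum; auto).
  f_equal. rewrite jet_sum by (intros; apply smoothC_sum; auto).
  f_equal. apply functional_extensionality; intros l.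
  rewrite jet_sum by auto. f_equal. apply functional_extensionality; intros r.
  rewrite jet_mul by (apply smoothC_dtan; auto). unfold d, e. rewrite jet_dtan; auto.
Qed.

Lemma hom_box1 k u m : (forall r, smoothC (u r)) ->
  smoothC (box1 FM k d u m) /\ jet (box1 FM k d u m) t = box1 JM k e (fun r => jet (u r) t) m.
Proof.
  intros H. unfold box1.
  assert (H1 : forall c, smoothC (D0star FM k d u c)) by (intros; apply hom_D0star; auto).
  assert (H2 : forall c, smoothC (D1 _ FM d u c)) by (intros; apply hom_D1; auto).
  destruct (hom_D0 (D0star FM k d u) m H1) as [A1 A2].
  destruct (hom_D1star k (D1 _ FM d u) m H2) as [B1 B2].
  split. apply smoothC_add; auto.
  rewrite jet_add, A2, B2; auto. f_equal.
  - f_equal. apply functional_extensionality; intros c. apply hom_D0star; auto.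
  - f_equal. apply functional_extensionality; intros c. apply hom_D1; auto.
Qed.
End Z.


Ltac ceq := apply injective_projections; simpl; ring.

Ltac eqb_cases := repeat (match goal with |- context [Nat.eqb ?a ?b] =>
   destruct (Nat.eqb_spec a b) end); try (exfalso; lia).

Definition dz0c l := dz0 C CM (dsel l) (RtoC 1).
Definition dzb0c l := dzb0 C CM (dsel l) (RtoC 1).
Definition dz1c l := dz1 C CM (dsel l) (RtoC 1).
Definition dzb1c l := dzb1 C CM (dsel l) (RtoC 1).

Definition ifc (b : bool) (a : C) : C := if b then a else RtoC 0.

Lemma parity r : exists q, r = (2 * q)%nat /\ Nat.odd r = false /\ Nat.div2 r = q
                       \/ r = (2 * q + 1)%nat /\ Nat.odd r = true /\ Nat.div2 r = q.
Proof.
  exists (Nat.div2 r). pose proof (Nat.div2_odd r) as H.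
  destruct (Nat.odd r); simpl in H; [right|left]; repeat split; lia.
Qed.

Lemma A0_0 l r : A0 l r 0 = Cplus (ifc (r =? 1) (dz0c l)) (ifc (r =? 0) (Copp (dzb1c l))).
Proof.
  unfold A0, D0, ifc, dz0c, dzb1c, evec.
  destruct (parity r) as [q [[E [O D]]|[E [O D]]]]; rewrite O, D; subst r;
  unfold dz0, dz1, dzb0, dzb1, subS, negS, dsel; cbv zeta;
  eqb_cases; ceq.
Qed.

Lemma A0_S l r c : A0 l r (S c) =
  Cplus (Cplus (ifc (r =? 2 * c + 3) (dz0c l)) (ifc (r =? 2 * c + 1) (Copp (dz1c l))))
        (Cplus (ifc (r =? 2 * c + 2) (Copp (dzb1c l))) (ifc (r =? 2 * c) (Copp (dzb0c l)))).
Proof.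
  unfold A0, D0, ifc, dz0c, dzb1c, dz1c, dzb0c, evec.
  destruct (parity r) as [q [[E [O D]]|[E [O D]]]]; rewrite O, D; subst r;
  unfold dz0, dz1, dzb0, dzb1, subS, negS, dsel; cbv zeta;
  eqb_cases; ceq.
Qed.

Lemma A1_even l r q : Defs.A1 l r (2 * q) =
  Cplus (ifc (r =? q) (Copp (dz0c l))) (ifc (S r =? q) (dz1c l)).
Proof.
  unfold Defs.A1, D1, ifc, dz0c, dz1c, evec.
  unfold dz0, dz1, dzb0, dzb1, subS, negS, dsel.
  eqb_cases; ceq.
Qed.

Lemma A1_odd l r q : Defs.A1 l r (2 * q + 1) =
  Cplus (ifc (r =? q) (Copp (dzb1c l))) (ifc (S r =? q) (Copp (dzb0c l))).
Proof.
  unfold Defs.A1, D1, ifc, dzb1c, dzb0c, evec.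
  unfold dz0, dz1, dzb0, dzb1, subS, negS, dsel.
  eqb_cases; ceq.
Qed.

Lemma sumS_ext {S} (M : CMod S) N f g : (forall r, (r < N)%nat -> f r = g r) ->
  sumS S M N f = sumS S M N g.
Proof.
  induction N; intros H. reflexivity. rewrite !sumS_S. rewrite IHN by auto. rewrite H by lia. auto.
Qed.

Lemma sumS_JM N F p : sumS _ JM N F p = sumS _ CM N (fun r => F r p).
Proof. induction N. reflexivity. rewrite !sumS_S. simpl. rewrite IHN. reflexivity. Qed.
Lemma sumS_FM N F t : sumS _ FM N F t = sumS _ CM N (fun r => F r t).
Proof. induction N. reflexivity. rewrite !sumS_S. simpl. rewrite IHN. reflexivity. Qed.

Lemma sumS_plus N f g : sumS _ CM N (fun r => Cplus (f r) (g r)) = Cplus (sumS _ CM N f) (sumS _ CM N g).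
Proof. induction N. simpl. ceq. rewrite !sumS_S. simpl. rewrite IHN.
  generalize (sumS C CM N f) (sumS C CM N g). intros. ceq. Qed.

Lemma sumS_delta N r0 (Y : nat -> C) : sumS _ CM N (fun r => ifc (r =? r0) (Y r)) = ifc (r0 <? N) (Y r0).
Proof.
  induction N. simpl. unfold ifc. destruct (Nat.ltb_spec r0 0); [lia|reflexivity].
  rewrite sumS_S, IHN. unfold ifc. simpl.
  destruct (Nat.ltb_spec r0 N); destruct (Nat.ltb_spec r0 (S N)); destruct (Nat.eqb_spec N r0);
   try (exfalso; lia); subst; try ceq.
Qed.

Lemma sumS_zero N : sumS _ CM N (fun _ => RtoC 0) = RtoC 0.
Proof. induction N. reflexivity. rewrite sumS_S, IHN. ceq. Qed.

Lemma conj_ifc b a Y : Cmult (Cconj (ifc b a)) Y = ifc b (Cmult (Cconj a) Y).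
Proof. destruct b; simpl. reflexivity. ceq. Qed.

Lemma sumS4 (f : nat -> C) : sumS _ CM 4 f = Cplus (Cplus (f 0%nat) (f 1%nat)) (Cplus (f 2%nat) (f 3%nat)).
Proof. simpl. generalize (f 0%nat) (f 1%nat) (f 2%nat) (f 3%nat). intros. ceq. Qed.

Lemma negS_JM x p : negS _ JM x p = Copp (x p).
Proof. simpl. generalize (x p). intros. ceq. Qed.

Lemma D0star_eval k e J c p : D0star JM k e J c p =
  Copp (sumS _ CM 4 (fun l => sumS _ CM (2 * k) (fun r => Cmult (Cconj (A0 l r c)) (e l (J r) p)))).
Proof.
  unfold D0star. rewrite negS_JM, sumS_JM. f_equal. apply sumS_ext. intros l _.
  rewrite sumS_JM. reflexivity.
Qed.

Lemma D1star_eval k e J c p : D1star JM k e J c p =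
  Copp (sumS _ CM 4 (fun l => sumS _ CM (k - 1) (fun r => Cmult (Cconj (Defs.A1 l r c)) (e l (J r) p)))).
Proof.
  unfold D1star. rewrite negS_JM, sumS_JM. f_equal. apply sumS_ext. intros l _.
  rewrite sumS_JM. reflexivity.
Qed.

Lemma collapse_A0_S N l c (Y : nat -> C) : sumS _ CM N (fun r => Cmult (Cconj (A0 l r (S c))) (Y r)) =
  Cplus (Cplus (ifc (2 * c + 3 <? N) (Cmult (Cconj (dz0c l)) (Y (2 * c + 3)%nat)))
               (ifc (2 * c + 1 <? N) (Cmult (Cconj (Copp (dz1c l))) (Y (2 * c + 1)%nat))))
        (Cplus (ifc (2 * c + 2 <? N) (Cmult (Cconj (Copp (dzb1c l))) (Y (2 * c + 2)%nat)))
               (ifc (2 * c <? N) (Cmult (Cconj (Copp (dzb0c l))) (Y (2 * c)%nat)))).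
Proof.
  rewrite (sumS_ext _ _ _ (fun r => Cplus (Cplus (ifc (r =? 2 * c + 3) (Cmult (Cconj (dz0c l)) (Y r)))
               (ifc (r =? 2 * c + 1) (Cmult (Cconj (Copp (dz1c l))) (Y r))))
        (Cplus (ifc (r =? 2 * c + 2) (Cmult (Cconj (Copp (dzb1c l))) (Y r)))
               (ifc (r =? 2 * c) (Cmult (Cconj (Copp (dzb0c l))) (Y r)))))).
  rewrite !sumS_plus, !sumS_delta. reflexivity.
  intros r _. rewrite A0_S. rewrite !Cplus_conj, !Cmult_plus_distr_r, !conj_ifc. reflexivity.
Qed.

Lemma collapse_A0_0 N l (Y : nat -> C) : sumS _ CM N (fun r => Cmult (Cconj (A0 l r 0)) (Y r)) =
  Cplus (ifc (1 <? N) (Cmult (Cconj (dz0c l)) (Y 1%nat)))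
        (ifc (0 <? N) (Cmult (Cconj (Copp (dzb1c l))) (Y 0%nat))).
Proof.
  rewrite (sumS_ext _ _ _ (fun r => Cplus (ifc (r =? 1) (Cmult (Cconj (dz0c l)) (Y r)))
        (ifc (r =? 0) (Cmult (Cconj (Copp (dzb1c l))) (Y r))))).
  rewrite !sumS_plus, !sumS_delta. reflexivity.
  intros r _. rewrite A0_0. rewrite !Cplus_conj, !Cmult_plus_distr_r, !conj_ifc. reflexivity.
Qed.

Ltac ltb_fix := repeat (match goal with |- context [Nat.ltb ?a ?b] =>
   destruct (Nat.ltb_spec a b) end); try (exfalso; lia).

Lemma D0star_S k e J c p : (S c <= k)%nat -> D0star JM k e J (S c) p =
 Cplus (ifc (S c <? k) (Cminus (dz1 _ JM e (J (2 * c + 2)%nat) p) (dzb0 _ JM e (J (2 * c + 3)%nat) p)))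
       (Cplus (dz0 _ JM e (J (2 * c)%nat) p) (dzb1 _ JM e (J (2 * c + 1)%nat) p)).
Proof.
  intros H. rewrite D0star_eval, sumS4, !collapse_A0_S.
  unfold dz0c, dz1c, dzb0c, dzb1c, ifc.
  unfold dz0, dz1, dzb0, dzb1, subS, negS. simpl dsel.
  ltb_fix; ceq.
Qed.

Lemma D0star_0 k e J p : (1 <= k)%nat -> D0star JM k e J 0 p =
  Cminus (dz1 _ JM e (J 0%nat) p) (dzb0 _ JM e (J 1%nat) p).
Proof.
  intros H. rewrite D0star_eval, sumS4, !collapse_A0_0.
  unfold dz0c, dz1c, dzb0c, dzb1c, ifc.
  unfold dz0, dz1, dzb0, dzb1, subS, negS. simpl dsel.
  ltb_fix; ceq.
Qed.

Lemma A1_e0 l r : Defs.A1 l r (2 * 0) = ifc (r =? 0) (Copp (dz0c l)).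
Proof.
  unfold Defs.A1, D1, ifc, dz0c, dz1c, evec.
  unfold dz0, dz1, dzb0, dzb1, subS, negS, dsel.
  eqb_cases; ceq.
Qed.
Lemma A1_eS l r q : Defs.A1 l r (2 * S q) = Cplus (ifc (r =? S q) (Copp (dz0c l))) (ifc (r =? q) (dz1c l)).
Proof.
  unfold Defs.A1, D1, ifc, dz0c, dz1c, evec.
  unfold dz0, dz1, dzb0, dzb1, subS, negS, dsel.
  eqb_cases; ceq.
Qed.
Lemma A1_o0 l r : Defs.A1 l r (2 * 0 + 1) = ifc (r =? 0) (Copp (dzb1c l)).
Proof.
  unfold Defs.A1, D1, ifc, dzb1c, dzb0c, evec.
  unfold dz0, dz1, dzb0, dzb1, subS, negS, dsel.
  eqb_cases; ceq.
Qed.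
Lemma A1_oS l r q : Defs.A1 l r (2 * S q + 1) = Cplus (ifc (r =? S q) (Copp (dzb1c l))) (ifc (r =? q) (Copp (dzb0c l))).
Proof.
  unfold Defs.A1, D1, ifc, dzb1c, dzb0c, evec.
  unfold dz0, dz1, dzb0, dzb1, subS, negS, dsel.
  eqb_cases; ceq.
Qed.

Lemma collapse1 N (F : nat -> C) a x (Y : nat -> C) : (forall r, F r = ifc (r =? a) x) ->
  sumS _ CM N (fun r => Cmult (Cconj (F r)) (Y r)) = ifc (a <? N) (Cmult (Cconj x) (Y a)).
Proof.
  intros H. rewrite <- (sumS_delta N a (fun r => Cmult (Cconj x) (Y r))). apply sumS_ext. intros r _. rewrite H, conj_ifc.
  unfold ifc. destruct (Nat.eqb_spec r a); subst; reflexivity.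
Qed.

Lemma collapse2 N (F : nat -> C) a b x y (Y : nat -> C) : (forall r, F r = Cplus (ifc (r =? a) x) (ifc (r =? b) y)) ->
  sumS _ CM N (fun r => Cmult (Cconj (F r)) (Y r)) =
   Cplus (ifc (a <? N) (Cmult (Cconj x) (Y a))) (ifc (b <? N) (Cmult (Cconj y) (Y b))).
Proof.
  intros H. rewrite <- (sumS_delta N a (fun r => Cmult (Cconj x) (Y r))).
  rewrite <- (sumS_delta N b (fun r => Cmult (Cconj y) (Y r))), <- sumS_plus. apply sumS_ext. intros r _.
  rewrite H, Cplus_conj, Cmult_plus_distr_r, !conj_ifc.
  unfold ifc. destruct (Nat.eqb_spec r a); destruct (Nat.eqb_spec r b); subst; reflexivity.
Qed.

Ltac fin_coef := unfold dz0c, dz1c, dzb0c, dzb1c, ifc;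
  unfold dz0, dz1, dzb0, dzb1, subS, negS; simpl dsel; ltb_fix; ceq.

Lemma D1star_e0 k e J p : D1star JM k e J (2 * 0) p = ifc (0 <? k - 1) (dzb0 _ JM e (J 0%nat) p).
Proof.
  rewrite D1star_eval, sumS4.
  rewrite !(collapse1 _ _ _ _ _ (A1_e0 _)). fin_coef.
Qed.
Lemma D1star_eS k e J q p : D1star JM k e J (2 * S q) p =
  Cminus (ifc (S q <? k - 1) (dzb0 _ JM e (J (S q)) p)) (ifc (q <? k - 1) (dzb1 _ JM e (J q) p)).
Proof.
  rewrite D1star_eval, sumS4.
  rewrite !(collapse2 _ _ _ _ _ _ _ (fun r => A1_eS _ r q)). fin_coef.
Qed.
Lemma D1star_o0 k e J p : D1star JM k e J (2 * 0 + 1) p = ifc (0 <? k - 1) (dz1 _ JM e (J 0%nat) p).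
Proof.
  rewrite D1star_eval, sumS4.
  rewrite !(collapse1 _ _ _ _ _ (A1_o0 _)). fin_coef.
Qed.
Lemma D1star_oS k e J q p : D1star JM k e J (2 * S q + 1) p =
  Cplus (ifc (S q <? k - 1) (dz1 _ JM e (J (S q)) p)) (ifc (q <? k - 1) (dz0 _ JM e (J q) p)).
Proof.
  rewrite D1star_eval, sumS4.
  rewrite !(collapse2 _ _ _ _ _ _ _ (fun r => A1_oS _ r q)). fin_coef.
Qed.


Lemma odd_2q q : Nat.odd (2 * q) = false.
Proof. destruct (parity (2*q)) as [r [[E [O _]]|[E _]]]; [auto|lia]. Qed.
Lemma div2_2q q : Nat.div2 (2 * q) = q.
Proof. destruct (parity (2*q)) as [r [[E [_ D]]|[E _]]]; lia. Qed.
Lemma odd_2q1 q : Nat.odd (2 * q + 1) = true.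
Proof. destruct (parity (2*q+1)) as [r [[E _]|[E [O _]]]]; [lia|auto]. Qed.
Lemma div2_2q1 q : Nat.div2 (2 * q + 1) = q.
Proof. destruct (parity (2*q+1)) as [r [[E _]|[E [_ D]]]]; lia. Qed.

Definition Qop (n xi : nat -> R) (J : nat -> C) (p : nat) : C :=
  Cplus (Cplus (Cmult (RtoC (dot4 n n)) (J (S (S p))))
               (Cmult (Cmult (RtoC 2) (Cmult Ci (RtoC (dot4 xi n)))) (J (S p))))
        (Cmult (RtoC (- dot4 xi xi)) (J p)).

Definition ZZ (e : nat -> (nat -> C) -> nat -> C) (W : nat -> C) : nat -> C :=
  fun p => Cplus (dz0 _ JM e (dzb0 _ JM e W) p) (dz1 _ JM e (dzb1 _ JM e W) p).

Lemma RtoC_m1 : RtoC (-1) = Copp (RtoC 1).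
Proof. ceq. Qed.

Lemma box_mid_even k n xi J j p : (S j <= k - 2)%nat ->
  box1 JM k (dj n xi) J (2 * S j) p = Cmult (RtoC (-2)) (ZZ (dj n xi) (J (2 * S j)%nat) p).
Proof.
  intros H. unfold box1, D0. rewrite odd_2q, div2_2q.
  unfold dz0, dz1, dzb0, dzb1, subS, negS. cbn [addS smulS JM].
  replace (S j + 1)%nat with (S (S j)) by lia.
  rewrite D1star_eS. unfold dj.
  rewrite !D0star_S by lia.
  unfold ifc; ltb_fix.
  unfold ZZ, D1, dz0, dz1, dzb0, dzb1, subS, negS, dj. cbn [addS smulS JM].
  replace (2 * S j + 3)%nat with (2 * j + 5)%nat by lia.
  replace (2 * S j + 2)%nat with (2 * j + 4)%nat by lia.
  replace (2 * S j + 1)%nat with (2 * j + 3)%nat by lia.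
  replace (2 * S j)%nat with (2 * j + 2)%nat by lia.
  generalize (J (2 * j)%nat) (J (2 * j + 1)%nat) (J (2 * j + 2)%nat) (J (2 * j + 3)%nat)
     (J (2 * j + 4)%nat) (J (2 * j + 5)%nat). intros.
  replace (RtoC (-2)) with (Copp (RtoC 2)) by ceq.
  rewrite !RtoC_m1. ring.
Qed.

Lemma box_mid_odd k n xi J j p : (S j <= k - 2)%nat ->
  box1 JM k (dj n xi) J (2 * S j + 1) p = Cmult (RtoC (-2)) (ZZ (dj n xi) (J (2 * S j + 1)%nat) p).
Proof.
  intros H. unfold box1, D0. rewrite odd_2q1, div2_2q1.
  unfold dz0, dz1, dzb0, dzb1, subS, negS. cbn [addS smulS JM].
  replace (S j + 1)%nat with (S (S j)) by lia.
  rewrite D1star_oS. unfold dj.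
  rewrite !D0star_S by lia.
  unfold ifc; ltb_fix.
  unfold ZZ, D1, dz0, dz1, dzb0, dzb1, subS, negS, dj. cbn [addS smulS JM].
  replace (2 * S j + 3)%nat with (2 * j + 5)%nat by lia.
  replace (2 * S j + 2)%nat with (2 * j + 4)%nat by lia.
  replace (2 * S j + 1)%nat with (2 * j + 3)%nat by lia.
  replace (2 * S j)%nat with (2 * j + 2)%nat by lia.
  generalize (J (2 * j)%nat) (J (2 * j + 1)%nat) (J (2 * j + 2)%nat) (J (2 * j + 3)%nat)
     (J (2 * j + 4)%nat) (J (2 * j + 5)%nat). intros.
  replace (RtoC (-2)) with (Copp (RtoC 2)) by ceq.
  rewrite !RtoC_m1. ring.
Qed.

Definition Sop (e : nat -> (nat -> C) -> nat -> C) (J0 J1 : nat -> C) : nat -> C :=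
  fun p => Cplus (dz0 _ JM e J0 p) (dzb1 _ JM e J1 p).
Definition Sop' (e : nat -> (nat -> C) -> nat -> C) (J0 J1 : nat -> C) : nat -> C :=
  fun p => Cminus (dz1 _ JM e J0 p) (dzb0 _ JM e J1 p).

Lemma box_0 k n xi J p : (3 <= k)%nat ->
  box1 JM k (dj n xi) J (2 * 0) p =
  Copp (Cplus (ZZ (dj n xi) (J 0%nat) p) (dzb0 _ JM (dj n xi) (Sop (dj n xi) (J 0%nat) (J 1%nat)) p)).
Proof.
  intros H. unfold box1, D0. rewrite odd_2q, div2_2q.
  unfold dz0, dz1, dzb0, dzb1, subS, negS. cbn [addS smulS JM].
  rewrite D1star_e0. unfold dj.
  change (0 + 1)%nat with (S 0). rewrite !D0star_S by lia. rewrite !D0star_0 by lia.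
  unfold ifc; ltb_fix.
  unfold ZZ, Sop, D1, dz0, dz1, dzb0, dzb1, subS, negS, dj. cbn [addS smulS JM].
  simpl Nat.mul. simpl Nat.add.
  generalize (J 0%nat) (J 1%nat) (J 2%nat) (J 3%nat). intros.
  rewrite !RtoC_m1. ring.
Qed.

Lemma box_1 k n xi J p : (3 <= k)%nat ->
  box1 JM k (dj n xi) J (2 * 0 + 1) p =
  Copp (Cplus (ZZ (dj n xi) (J 1%nat) p) (dz1 _ JM (dj n xi) (Sop (dj n xi) (J 0%nat) (J 1%nat)) p)).
Proof.
  intros H. unfold box1, D0. rewrite odd_2q1, div2_2q1.
  unfold dz0, dz1, dzb0, dzb1, subS, negS. cbn [addS smulS JM].
  rewrite D1star_o0. unfold dj.
  change (0 + 1)%nat with (S 0). rewrite !D0star_S by lia. rewrite !D0star_0 by lia.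
  unfold ifc; ltb_fix.
  unfold ZZ, Sop, D1, dz0, dz1, dzb0, dzb1, subS, negS, dj. cbn [addS smulS JM].
  simpl Nat.mul. simpl Nat.add.
  generalize (J 0%nat) (J 1%nat) (J 2%nat) (J 3%nat). intros.
  rewrite !RtoC_m1. ring.
Qed.

Lemma box_L0 j n xi J p : (1 <= j)%nat ->
  box1 JM (S (S j)) (dj n xi) J (2 * S j) p =
  Copp (Cplus (ZZ (dj n xi) (J (2 * S j)%nat) p)
     (dzb1 _ JM (dj n xi) (Sop' (dj n xi) (J (2 * S j)%nat) (J (2 * S j + 1)%nat)) p)).
Proof.
  intros H. unfold box1, D0. rewrite odd_2q, div2_2q.
  unfold dz0, dz1, dzb0, dzb1, subS, negS. cbn [addS smulS JM].
  replace (S j + 1)%nat with (S (S j)) by lia.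
  rewrite D1star_eS. unfold dj.
  rewrite !D0star_S by lia.
  unfold ifc; ltb_fix.
  unfold ZZ, Sop', D1, dz0, dz1, dzb0, dzb1, subS, negS, dj. cbn [addS smulS JM].
  replace (2 * S j + 3)%nat with (2 * j + 5)%nat by lia.
  replace (2 * S j + 2)%nat with (2 * j + 4)%nat by lia.
  replace (2 * S j + 1)%nat with (2 * j + 3)%nat by lia.
  replace (2 * S j)%nat with (2 * j + 2)%nat by lia.
  generalize (J (2 * j)%nat) (J (2 * j + 1)%nat) (J (2 * j + 2)%nat) (J (2 * j + 3)%nat). intros.
  rewrite !RtoC_m1. ring.
Qed.

Lemma box_L1 j n xi J p : (1 <= j)%nat ->
  box1 JM (S (S j)) (dj n xi) J (2 * S j + 1) p =
  Copp (Cminus (ZZ (dj n xi) (J (2 * S j + 1)%nat) p)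
     (dz0 _ JM (dj n xi) (Sop' (dj n xi) (J (2 * S j)%nat) (J (2 * S j + 1)%nat)) p)).
Proof.
  intros H. unfold box1, D0. rewrite odd_2q1, div2_2q1.
  unfold dz0, dz1, dzb0, dzb1, subS, negS. cbn [addS smulS JM].
  replace (S j + 1)%nat with (S (S j)) by lia.
  rewrite D1star_oS. unfold dj.
  rewrite !D0star_S by lia.
  unfold ifc; ltb_fix.
  unfold ZZ, Sop', D1, dz0, dz1, dzb0, dzb1, subS, negS, dj. cbn [addS smulS JM].
  replace (2 * S j + 3)%nat with (2 * j + 5)%nat by lia.
  replace (2 * S j + 2)%nat with (2 * j + 4)%nat by lia.
  replace (2 * S j + 1)%nat with (2 * j + 3)%nat by lia.
  replace (2 * S j)%nat with (2 * j + 2)%nat by lia.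
  generalize (J (2 * j)%nat) (J (2 * j + 1)%nat) (J (2 * j + 2)%nat) (J (2 * j + 3)%nat). intros.
  rewrite !RtoC_m1. ring.
Qed.


Lemma exp_id_L1 (h : R -> R) (c : R) :
  (forall x, ex_derive h x) -> (forall t, 0 < t -> Derive h t = c * h t) ->
  forall t, 0 <= t -> h t = h 0 * exp (c * t).
Proof.
  intros Hd Heq t Ht.
  destruct (Req_dec t 0) as [->|Ht0]. rewrite Rmult_0_r, exp_0; ring.
  assert (Hpos : 0 < t) by lra.
  set (phi := fun s => h s * exp (-(c * s))).
  destruct (MVT_gen phi 0 t (fun _ => 0)) as [z [Hz E]].
  - intros x Hx. rewrite Rmin_left, Rmax_right in Hx by lra.
    unfold phi. auto_derive. apply Hd.
    change (fun x0 : R => h x0) with h. rewrite Heq by lra. ring.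
  - intros x _. apply continuity_pt_filterlim. apply (@ex_derive_continuous R_AbsRing R_NormedModule).
    unfold phi. auto_derive. apply Hd.
  - unfold phi in E. rewrite Rmult_0_r, Ropp_0, exp_0, Rmult_0_l in E.
    assert (h t * exp (- (c * t)) = h 0) by lra.
    replace (h t) with (h t * exp (- (c * t)) * exp (c * t)).
    rewrite H; ring.
    rewrite Rmult_assoc, <- exp_plus. replace (- (c * t) + c * t) with 0 by ring.
    rewrite exp_0; ring.
Qed.

Lemma Sm_ex1 f x : Sm f -> ex_derive f x.
Proof. intros H. exact (H 1%nat x). Qed.
Lemma Sm_ex2 f x : Sm f -> ex_derive (Derive f) x.
Proof. intros H. exact (H 2%nat x). Qed.

Lemma ode2 (f : R -> R) (c P Q : R) : 0 < c -> Sm f ->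
  (forall t, 0 < t -> Derive (Derive f) t = c ^ 2 * f t + P * exp (c * t) + Q * exp (- (c * t))) ->
  exists K1 K2, forall t, 0 <= t ->
    f t = (K1 + P * t / (2 * c)) * exp (c * t) + (K2 - Q * t / (2 * c)) * exp (- (c * t)).
Proof.
  intros Hc Hf Hode.
  set (g := fun s => f s - P * s * exp (c * s) / (2 * c) + Q * s * exp (- (c * s)) / (2 * c)).
  set (dg := fun s => Derive f s - P * (exp (c * s) + c * s * exp (c * s)) / (2 * c)
                      + Q * (exp (- (c * s)) - c * s * exp (- (c * s))) / (2 * c)).
  assert (Hg : forall s, is_derive g s (dg s)).
  { intros s. unfold g, dg. auto_derive. apply Sm_ex1; auto.
    change (fun x : R => f x) with f. field. lra. }
  set (h := fun s => dg s + c * g s).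
  assert (Hh : forall s, 0 < s -> is_derive h s (c * h s)).
  { intros s Hs. unfold h, dg, g.
    assert (E := Hode s Hs).
    auto_derive. split. apply Sm_ex2; auto. split. apply Sm_ex1; auto. exact I.
    change (fun x : R => Derive f x) with (Derive f). change (fun x : R => f x) with f.
    rewrite E. field. lra. }
  assert (Hhd : forall s, ex_derive h s).
  { intros s. unfold h, dg, g. auto_derive. split. apply Sm_ex2; auto. split. apply Sm_ex1; auto. exact I. }
  assert (HL := exp_id_L1 h c Hhd).
  assert (Hh2 : forall t, 0 <= t -> h t = h 0 * exp (c * t)).
  { apply HL. intros t Ht. apply is_derive_unique. now apply Hh. }
  set (H0 := h 0).
  set (kk := fun s => g s - H0 * exp (c * s) / (2 * c)).
  assert (Hk : forall s, 0 < s -> is_derive kk s (- c * kk s)).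
  { intros s Hs.
    assert (E : dg s + c * g s = H0 * exp (c * s)) by (exact (Hh2 s (Rlt_le _ _ Hs))).
    unfold dg, g in E.
    assert (Df : Derive f s = H0 * exp (c * s) - (- P * (exp (c * s) + c * s * exp (c * s)) / (2 * c) +
      Q * (exp (- (c * s)) - c * s * exp (- (c * s))) / (2 * c) +
      c * (f s - P * s * exp (c * s) / (2 * c) + Q * s * exp (- (c * s)) / (2 * c)))) by (rewrite <- E; field; lra).
    unfold kk, g. auto_derive. apply Sm_ex1; auto.
    change (fun x : R => f x) with f. rewrite Df. field. lra. }
  assert (Hkd : forall s, ex_derive kk s).
  { intros s. unfold kk, g. auto_derive. apply Sm_ex1; auto. }
  assert (HL2 := exp_id_L1 kk (- c) Hkd).
  exists (H0 / (2 * c)), (kk 0).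
  intros t Ht.
  assert (E := HL2 (fun s Hs => is_derive_unique _ _ _ (Hk s Hs)) t Ht).
  unfold kk, g in E. unfold kk, g.
  replace (- c * t) with (- (c * t)) in E by ring.
  field_simplify; [|lra].
  replace (f t) with (((f t - P * t * exp (c * t) / (2 * c) + Q * t * exp (- (c * t)) / (2 * c)) - H0 * exp (c * t) / (2 * c))
       + P * t * exp (c * t) / (2 * c) - Q * t * exp (- (c * t)) / (2 * c) + H0 * exp (c * t) / (2 * c)) by ring.
  rewrite E. field. lra.
Qed.

Lemma texp_bound c t : 0 < c -> 0 <= t -> t * exp (- (c * t)) <= / c.
Proof.
  intros Hc Ht. rewrite exp_Ropp.
  assert (H1 := exp_ineq1_le (c * t)). assert (H2 := exp_pos (c * t)).
  apply (Rmult_le_reg_r (exp (c * t) * c)). apply Rmult_lt_0_compat; lra.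
  replace (t * / exp (c * t) * (exp (c * t) * c)) with (c * t) by (field; lra).
  replace (/ c * (exp (c * t) * c)) with (exp (c * t)) by (field; lra). lra.
Qed.

Lemma bnd_growth (K1 P K2 Q c B : R) : 0 < c ->
  (forall t, 0 <= t -> Rabs ((K1 + P * t / (2 * c)) * exp (c * t) + (K2 - Q * t / (2 * c)) * exp (- (c * t))) <= B) ->
  K1 = 0 /\ P = 0.
Proof.
  intros Hc HB.
  set (M := B + Rabs K2 + Rabs Q / (2 * c * c)).
  assert (HA : forall t, 0 <= t -> Rabs (K1 + P * t / (2 * c)) * (1 + c * t) <= M).
  { intros t Ht.
    assert (E1 := exp_ineq1_le (c * t)). assert (E2 := exp_pos (c * t)).
    assert (E3 := exp_pos (- (c * t))).
    assert (E4 : exp (- (c * t)) <= 1). { rewrite <- exp_0. apply exp_le_3 || idtac.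
      destruct (Req_dec t 0). subst. rewrite Rmult_0_r, Ropp_0. lra.
      left. apply exp_increasing. nra. }
    assert (E5 := texp_bound c t Hc Ht).
    assert (H := HB t Ht).
    assert (Hx : Rabs (K1 + P * t / (2 * c)) * exp (c * t) <= B + Rabs ((K2 - Q * t / (2 * c)) * exp (- (c * t)))).
    { rewrite <- (Rabs_pos_eq (exp (c * t))) by lra. rewrite <- Rabs_mult.
      pose proof (Rabs_triang ((K1 + P * t / (2 * c)) * exp (c * t) + (K2 - Q * t / (2 * c)) * exp (- (c * t)))
         (- ((K2 - Q * t / (2 * c)) * exp (- (c * t))))) as T.
      rewrite Rabs_Ropp in T. replace ((K1 + P * t / (2 * c)) * exp (c * t) + (K2 - Q * t / (2 * c)) * exp (- (c * t)) +
             - ((K2 - Q * t / (2 * c)) * exp (- (c * t)))) with ((K1 + P * t / (2 * c)) * exp (c * t)) in T by ring.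
      lra. }
    assert (Hy : Rabs ((K2 - Q * t / (2 * c)) * exp (- (c * t))) <= Rabs K2 + Rabs Q / (2 * c * c)).
    { rewrite Rabs_mult, (Rabs_pos_eq (exp _)) by lra.
      assert (Rabs (K2 - Q * t / (2 * c)) <= Rabs K2 + Rabs Q * t / (2 * c)).
      { unfold Rminus. eapply Rle_trans. apply Rabs_triang. rewrite Rabs_Ropp.
        unfold Rdiv. rewrite !Rabs_mult. rewrite (Rabs_pos_eq t) by lra.
        rewrite (Rabs_pos_eq (/ (2 * c))). lra. left. apply Rinv_0_lt_compat. lra. }
      assert (0 <= Rabs K2) by apply Rabs_pos. assert (0 <= Rabs Q) by apply Rabs_pos.
      apply Rle_trans with ((Rabs K2 + Rabs Q * t / (2 * c)) * exp (- (c * t))).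
      apply Rmult_le_compat_r; lra.
      rewrite Rmult_plus_distr_r.
      assert (Rabs K2 * exp (- (c * t)) <= Rabs K2) by nra.
      assert (Rabs Q * t / (2 * c) * exp (- (c * t)) <= Rabs Q / (2 * c * c)).
      { replace (Rabs Q * t / (2 * c) * exp (- (c * t))) with (Rabs Q / (2 * c) * (t * exp (- (c * t)))) by (field; lra).
        replace (Rabs Q / (2 * c * c)) with (Rabs Q / (2 * c) * / c) by (field; lra).
        apply Rmult_le_compat_l. apply Rmult_le_pos; auto. left; apply Rinv_0_lt_compat; lra. auto. }
      lra. }
    assert (0 <= Rabs (K1 + P * t / (2 * c))) by apply Rabs_pos.
    unfold M. nra. }
  assert (HM : 0 <= M). { assert (H := HA 0 (Rle_refl 0)). assert (0 <= Rabs (K1 + P * 0 / (2 * c))) by apply Rabs_pos. nra. }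
  assert (HP : P = 0).
  { destruct (Req_dec P 0) as [|HP]; auto. exfalso.
    set (t := 2 * c * (M + Rabs K1 + 1) / Rabs P).
    assert (Hp : 0 < Rabs P) by (apply Rabs_pos_lt; auto).
    assert (Ht : 0 <= t). { unfold t. apply Rmult_le_pos. assert (0 <= Rabs K1) by apply Rabs_pos. nra. left; apply Rinv_0_lt_compat; auto. }
    assert (H := HA t Ht).
    assert (H2 : Rabs (P * t / (2 * c)) = M + Rabs K1 + 1).
    { unfold Rdiv. rewrite !Rabs_mult, (Rabs_pos_eq t), (Rabs_pos_eq (/ (2 * c))) by (auto; left; apply Rinv_0_lt_compat; lra).
      unfold t. field. split; lra. }
    assert (H3 : Rabs (P * t / (2 * c)) <= Rabs (K1 + P * t / (2 * c)) + Rabs K1).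
    { replace (P * t / (2 * c)) with ((K1 + P * t / (2 * c)) + - K1) at 1 by ring.
      eapply Rle_trans. apply Rabs_triang. rewrite Rabs_Ropp. lra. }
    assert (0 <= c * t) by nra.
    assert (Rabs (K1 + P * t / (2 * c)) <= Rabs (K1 + P * t / (2 * c)) * (1 + c * t)).
    { assert (0 <= Rabs (K1 + P * t / (2 * c))) by apply Rabs_pos. nra. }
    lra. }
  split; auto. subst P.
  destruct (Req_dec K1 0) as [|HK]; auto. exfalso.
  assert (Hp : 0 < Rabs K1) by (apply Rabs_pos_lt; auto).
  set (t := (M + 1) / (c * Rabs K1)).
  assert (Ht : 0 <= t). { unfold t. apply Rmult_le_pos. lra. left; apply Rinv_0_lt_compat; nra. }
  assert (H := HA t Ht).
  replace (K1 + 0 * t / (2 * c)) with K1 in H by (field; lra).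
  assert (Rabs K1 * (c * t) = M + 1) by (unfold t; field; split; lra).
  nra.
Qed.


Lemma Cmod_sum0 (a b : C) : Cplus a b = RtoC 0 -> Cmod a = Cmod b.
Proof.
  intros H. assert (a = Copp b).
  { replace a with (Cplus (Cplus a b) (Copp b)) by ring. rewrite H. ring. }
  subst. apply Cmod_opp.
Qed.

Lemma Cmod_sum3 (a b d : C) : Cplus (Cplus a b) d = RtoC 0 -> Cmod a <= Cmod b + Cmod d.
Proof.
  intros H. assert (a = Copp (Cplus b d)).
  { replace a with (Cplus (Cplus (Cplus a b) d) (Copp (Cplus b d))) by ring. rewrite H. ring. }
  subst. rewrite Cmod_opp. apply Cmod_triangle.
Qed.

Lemma Cmod_RtoC_mult (r : R) (z : C) : 0 <= r -> Cmod (Cmult (RtoC r) z) = r * Cmod z.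
Proof. intros. rewrite Cmod_mult, Cmod_R, Rabs_pos_eq; auto. Qed.

Lemma final_alg (k : nat) (c y : R) (Kf : C) (x : nat -> C) :
  (3 <= k)%nat -> 0 < c -> Rabs y <= c -> Cmod Kf <= c ->
  Cplus (Cmult (RtoC ((y + c) ^ 2 + 4 * c ^ 2)) (x 0%nat)) (Cmult (RtoC (3 * c + y)) (Cmult Kf (x 1%nat))) = RtoC 0 ->
  (forall j, (1 <= j)%nat -> (j <= k - 3)%nat ->
     Cplus (Cplus (Cmult (RtoC (2 * c)) (x j)) (Cmult (Cconj Kf) (x (j - 1)%nat))) (Cmult Kf (x (S j))) = RtoC 0) ->
  Cplus (Cmult (RtoC ((y - c) ^ 2 + 4 * c ^ 2)) (x (k - 2)%nat)) (Cmult (RtoC (3 * c - y)) (Cmult (Cconj Kf) (x (k - 3)%nat))) = RtoC 0 ->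
  forall j, (j <= k - 2)%nat -> x j = RtoC 0.
Proof.
  intros Hk Hc Hy HK R0 RM RL.
  assert (Hy1 : - c <= y <= c) by (split; [apply Ropp_le_cancel; rewrite Ropp_involutive; eapply Rle_trans; [apply Rle_abs | rewrite Rabs_Ropp; exact Hy] | eapply Rle_trans; [apply Rle_abs | exact Hy]]).
  assert (mono : forall j, (j <= k - 3)%nat -> Cmod (x j) <= Cmod (x (S j))).
  { induction j as [|j IH]; intros Hj.
    - apply Cmod_sum0 in R0.
      rewrite Cmod_RtoC_mult in R0 by nra. rewrite Cmod_RtoC_mult in R0 by lra.
      rewrite Cmod_mult in R0.
      assert (0 <= Cmod (x 0%nat)) by apply Cmod_ge_0.
      assert (0 <= Cmod (x 1%nat)) by apply Cmod_ge_0.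
      assert (0 <= Cmod Kf) by apply Cmod_ge_0.
      assert ((3 * c + y) * (Cmod Kf * Cmod (x 1%nat)) <= (3 * c + y) * (c * Cmod (x 1%nat))).
      { apply Rmult_le_compat_l. lra. apply Rmult_le_compat_r; lra. }
      assert (Hd : 0 < (y + c) ^ 2 + 4 * c ^ 2 - (3 * c + y) * c) by nra.
      assert (Hx : ((y + c) ^ 2 + 4 * c ^ 2) * Cmod (x 0%nat) <= ((y + c) ^ 2 + 4 * c ^ 2) * Cmod (x 1%nat)).
      { assert (((3 * c + y) * c) * Cmod (x 1%nat) <= ((y + c) ^ 2 + 4 * c ^ 2) * Cmod (x 1%nat)).
        apply Rmult_le_compat_r; lra. nra. }
      apply Rmult_le_reg_l in Hx; auto. nra.
    - assert (IH' := IH ltac:(lia)).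
      specialize (RM (S j) ltac:(lia) Hj). replace (S j - 1)%nat with j in RM by lia.
      apply Cmod_sum3 in RM.
      rewrite Cmod_RtoC_mult in RM by lra. rewrite !Cmod_mult, Cmod_conj in RM.
      assert (0 <= Cmod (x j)) by apply Cmod_ge_0.
      assert (0 <= Cmod (x (S (S j)))) by apply Cmod_ge_0.
      assert (0 <= Cmod Kf) by apply Cmod_ge_0.
      assert (Cmod Kf * Cmod (x j) <= c * Cmod (x j)) by (apply Rmult_le_compat_r; lra).
      assert (Cmod Kf * Cmod (x (S (S j))) <= c * Cmod (x (S (S j)))) by (apply Rmult_le_compat_r; lra).
      nra. }
  assert (chain : forall j, (j <= k - 2)%nat -> Cmod (x j) <= Cmod (x (k - 2)%nat)).
  { intros j Hj. remember (k - 2 - j)%nat as d. revert j Hj Heqd. induction d; intros j Hj Hd.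
    - replace j with (k - 2)%nat by lia. lra.
    - eapply Rle_trans. apply mono. lia. apply IHd; lia. }
  assert (Hlast : Cmod (x (k - 2)%nat) = 0).
  { apply Cmod_sum0 in RL.
    rewrite Cmod_RtoC_mult in RL by nra. rewrite Cmod_RtoC_mult in RL by lra.
    rewrite Cmod_mult, Cmod_conj in RL.
    assert (H1 := chain (k - 3)%nat ltac:(lia)).
    assert (0 <= Cmod (x (k - 3)%nat)) by apply Cmod_ge_0.
    assert (0 <= Cmod (x (k - 2)%nat)) by apply Cmod_ge_0.
    assert (0 <= Cmod Kf) by apply Cmod_ge_0.
    assert ((3 * c - y) * (Cmod Kf * Cmod (x (k - 3)%nat)) <= (3 * c - y) * (c * Cmod (x (k - 2)%nat))).
    { apply Rmult_le_compat_l. lra. apply Rmult_le_compat; lra. }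
    assert (0 < y ^ 2 - c * y + 2 * c ^ 2) by nra.
    nra. }
  intros j Hj. apply Cmod_eq_0. assert (H := chain j Hj). assert (0 <= Cmod (x j)) by apply Cmod_ge_0. lra.
Qed.


Definition al (n : nat -> R) : C := Cminus (RtoC (n 0%nat)) (Cmult Ci (RtoC (n 1%nat))).
Definition alb (n : nat -> R) : C := Cplus (RtoC (n 0%nat)) (Cmult Ci (RtoC (n 1%nat))).
Definition be (n : nat -> R) : C := Cminus (RtoC (n 2%nat)) (Cmult Ci (RtoC (n 3%nat))).
Definition beb (n : nat -> R) : C := Cplus (RtoC (n 2%nat)) (Cmult Ci (RtoC (n 3%nat))).

Lemma dz0_dj n xi W p : dz0 _ JM (dj n xi) W p = Cplus (Cmult (Cmult Ci (al xi)) (W p)) (Cmult (al n) (W (S p))).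
Proof. unfold dz0, subS, negS, dj, al. cbn [addS smulS JM]. rewrite RtoC_m1. ring. Qed.
Lemma dzb0_dj n xi W p : dzb0 _ JM (dj n xi) W p = Cplus (Cmult (Cmult Ci (alb xi)) (W p)) (Cmult (alb n) (W (S p))).
Proof. unfold dzb0, subS, negS, dj, alb. cbn [addS smulS JM]. ring. Qed.
Lemma dz1_dj n xi W p : dz1 _ JM (dj n xi) W p = Cplus (Cmult (Cmult Ci (be xi)) (W p)) (Cmult (be n) (W (S p))).
Proof. unfold dz1, subS, negS, dj, be. cbn [addS smulS JM]. rewrite RtoC_m1. ring. Qed.
Lemma dzb1_dj n xi W p : dzb1 _ JM (dj n xi) W p = Cplus (Cmult (Cmult Ci (beb xi)) (W p)) (Cmult (beb n) (W (S p))).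
Proof. unfold dzb1, subS, negS, dj, beb. cbn [addS smulS JM]. ring. Qed.

Lemma ZZ_form n xi W p : ZZ (dj n xi) W p =
  Cplus (Cplus (Cmult (RtoC (dot4 n n)) (W (S (S p))))
               (Cmult (Cmult (RtoC 2) (Cmult Ci (RtoC (dot4 xi n)))) (W (S p))))
        (Cmult (RtoC (- dot4 xi xi)) (W p)).
Proof.
  unfold ZZ. rewrite dz0_dj, dz1_dj, !dzb0_dj, !dzb1_dj.
  unfold al, alb, be, beb, dot4. generalize (W p) (W (S p)) (W (S (S p))). intros. ceq.
Qed.

Definition en (n : nat -> R) : nat -> (nat -> C) -> nat -> C := fun l J p => Cmult (RtoC (n l)) (J p).
Lemma dz0_en n W p : dz0 _ JM (en n) W p = Cmult (al n) (W p).
Proof. unfold dz0, subS, negS, en, al. cbn [addS smulS JM]. rewrite RtoC_m1. ring. Qed.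
Lemma dzb0_en n W p : dzb0 _ JM (en n) W p = Cmult (alb n) (W p).
Proof. unfold dzb0, subS, negS, en, alb. cbn [addS smulS JM]. ring. Qed.
Lemma dz1_en n W p : dz1 _ JM (en n) W p = Cmult (be n) (W p).
Proof. unfold dz1, subS, negS, en, be. cbn [addS smulS JM]. rewrite RtoC_m1. ring. Qed.
Lemma dzb1_en n W p : dzb1 _ JM (en n) W p = Cmult (beb n) (W p).
Proof. unfold dzb1, subS, negS, en, beb. cbn [addS smulS JM]. ring. Qed.

Lemma D0star_CM k n a c : D0star CM k (dnu n) a c = D0star JM k (en n) (fun r _ => a r) c 0%nat.
Proof.
  rewrite D0star_eval. unfold D0star, negS. cbn [smulS CM]. rewrite RtoC_m1.
  match goal with |- Cmult _ ?X = Copp ?Y => transitivity (Copp X); [ring | reflexivity] end.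
Qed.

Lemma D1star_CM k n a c : D1star CM k (dnu n) a c = D1star JM k (en n) (fun r _ => a r) c 0%nat.
Proof.
  rewrite D1star_eval. unfold D1star, negS. cbn [smulS CM]. rewrite RtoC_m1.
  match goal with |- Cmult _ ?X = Copp ?Y => transitivity (Copp X); [ring | reflexivity] end.
Qed.


Lemma jet0 w t : jet w t 0%nat = w t.
Proof. unfold jet. simpl. destruct (w t); reflexivity. Qed.

Lemma locally_pos (t : R) : 0 < t -> locally t (fun s => 0 < s).
Proof.
  intros Ht. exists (mkposreal t Ht). intros y Hy. change (Rabs (y - t) < t) in Hy.
  apply Rabs_def2 in Hy. lra.
Qed.

Lemma jet_loc (w v : R -> C) t : 0 < t -> (forall s, 0 < s -> w s = v s) -> forall p, jet w t p = jet v t p.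
Proof.
  intros Ht H p. unfold jet. f_equal; apply Derive_n_ext_loc;
  apply (filter_imp (fun s => 0 < s)); try (apply locally_pos; exact Ht);
  intros s Hs; simpl; rewrite H; auto.
Qed.

Lemma jet_zero_fun t p : jet (fun _ => RtoC 0) t p = RtoC 0.
Proof. unfold jet. simpl. destruct p. reflexivity. rewrite !Derive_n_const. reflexivity. Qed.

Lemma right_deriv (f g : R -> R) t : ex_derive f t -> ex_derive g t ->
  (forall s, t <= s -> f s = g s) -> Derive f t = Derive g t.
Proof.
  intros Hf Hg H.
  apply Derive_correct in Hf. apply Derive_correct in Hg.
  apply is_derive_Reals in Hf. apply is_derive_Reals in Hg.
  set (l1 := Derive f t) in *. set (l2 := Derive g t) in *.
  destruct (Req_dec l1 l2) as [|Hne]; auto. exfalso.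
  set (eps := Rabs (l1 - l2) / 2).
  assert (Heps : 0 < eps) by (unfold eps; apply Rdiv_lt_0_compat; [apply Rabs_pos_lt; lra | lra]).
  destruct (Hf eps Heps) as [d1 Hd1]. destruct (Hg eps Heps) as [d2 Hd2].
  set (h := Rmin d1 d2 / 2).
  assert (Hh : 0 < h) by (unfold h; apply Rdiv_lt_0_compat; [apply Rmin_pos; apply cond_pos | lra]).
  assert (Hh1 : Rabs h < d1). { rewrite Rabs_pos_eq by lra. unfold h. assert (Rmin d1 d2 <= d1) by apply Rmin_l. assert (0 < d1) by apply cond_pos. lra. }
  assert (Hh2 : Rabs h < d2). { rewrite Rabs_pos_eq by lra. unfold h. assert (Rmin d1 d2 <= d2) by apply Rmin_r. assert (0 < d2) by apply cond_pos. lra. }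
  specialize (Hd1 h ltac:(lra) Hh1). specialize (Hd2 h ltac:(lra) Hh2).
  rewrite (H (t + h)) in Hd1 by lra. rewrite (H t) in Hd1 by lra.
  assert (Rabs (l1 - l2) <= Rabs ((g (t + h) - g t) / h - l1) + Rabs ((g (t + h) - g t) / h - l2)).
  { replace (l1 - l2) with (- ((g (t + h) - g t) / h - l1) + ((g (t + h) - g t) / h - l2)) by ring.
    eapply Rle_trans. apply Rabs_triang. rewrite Rabs_Ropp. lra. }
  unfold eps in *. lra.
Qed.

Lemma ex_derive_fst_smooth w t : smoothC w -> ex_derive (fun s => fst (w s)) t /\ ex_derive (fun s => snd (w s)) t.
Proof. intros H. split; apply (H 1%nat t). Qed.

Lemma jet1_right (w v : R -> C) t :
  ex_derive (fun s => fst (w s)) t -> ex_derive (fun s => snd (w s)) t ->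
  ex_derive (fun s => fst (v s)) t -> ex_derive (fun s => snd (v s)) t ->
  (forall s, t <= s -> w s = v s) -> jet w t 1%nat = jet v t 1%nat.
Proof.
  intros H1 H2 H3 H4 H. unfold jet. simpl. f_equal; apply right_deriv; auto; intros s Hs; rewrite H; auto.
Qed.

Definition expd (a b : C) (c : R) : R -> C :=
  fun s => Cmult (Cplus a (Cmult b (RtoC s))) (RtoC (exp (- (c * s)))).
Definition expg (A B : C) (c : R) : R -> C :=
  fun s => Cplus (Cmult A (RtoC (exp (c * s)))) (Cmult B (RtoC (exp (- (c * s))))).

Lemma expd_deriv a b c t : ex_derive (fun s => fst (expd a b c s)) t /\ ex_derive (fun s => snd (expd a b c s)) t /\
  jet (expd a b c) t 1%nat = Cmult (Cminus b (Cmult (RtoC c) (Cplus a (Cmult b (RtoC t))))) (RtoC (exp (- (c * t)))).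
Proof.
  unfold expd. simpl. split; [|split].
  - auto_derive. auto.
  - auto_derive. auto.
  - unfold jet. simpl. destruct a as [a1 a2], b as [b1 b2]. simpl.
    apply injective_projections; simpl; apply is_derive_unique; auto_derive; auto; ring.
Qed.

Lemma expg_deriv A B c t : ex_derive (fun s => fst (expg A B c s)) t /\ ex_derive (fun s => snd (expg A B c s)) t /\
  jet (expg A B c) t 1%nat = Cminus (Cmult (Cmult (RtoC c) A) (RtoC (exp (c * t)))) (Cmult (Cmult (RtoC c) B) (RtoC (exp (- (c * t))))).
Proof.
  unfold expg. simpl. split; [|split].
  - auto_derive. auto.
  - auto_derive. auto.
  - unfold jet. simpl. destruct A as [a1 a2], B as [b1 b2]. simpl.
    apply injective_projections; simpl; apply is_derive_unique; auto_derive; auto; ring.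
Qed.

Lemma decayC (w : R -> C) (c B : R) (P Q : C) : 0 < c -> smoothC w ->
  (forall t, 0 <= t -> Cmod (w t) <= B) ->
  (forall t, 0 < t -> jet w t 2%nat = Cplus (Cplus (Cmult (RtoC (c ^ 2)) (w t)) (Cmult P (RtoC (exp (c * t)))))
                                            (Cmult Q (RtoC (exp (- (c * t)))))) ->
  P = RtoC 0 /\ forall t, 0 <= t -> w t = expd (w 0) (Cmult (RtoC (- / (2 * c))) Q) c t.
Proof.
  intros Hc Hw HB Hode. apply smoothC_Sm in Hw as [W1 W2].
  destruct P as [P1 P2], Q as [Q1 Q2].
  assert (O1 : forall t, 0 < t -> Derive (Derive (fun s => fst (w s))) t = c ^ 2 * fst (w t) + P1 * exp (c * t) + Q1 * exp (- (c * t))).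
  { intros t Ht. change (Derive (Derive (fun s => fst (w s))) t) with (fst (jet w t 2%nat)). rewrite Hode by auto. simpl. ring. }
  assert (O2 : forall t, 0 < t -> Derive (Derive (fun s => snd (w s))) t = c ^ 2 * snd (w t) + P2 * exp (c * t) + Q2 * exp (- (c * t))).
  { intros t Ht. change (Derive (Derive (fun s => snd (w s))) t) with (snd (jet w t 2%nat)). rewrite Hode by auto. simpl. ring. }
  destruct (ode2 _ c P1 Q1 Hc W1 O1) as [K1 [K2 F1]].
  destruct (ode2 _ c P2 Q2 Hc W2 O2) as [L1 [L2 F2]].
  assert (B1 : forall t, 0 <= t -> Rabs ((K1 + P1 * t / (2 * c)) * exp (c * t) + (K2 - Q1 * t / (2 * c)) * exp (- (c * t))) <= B).
  { intros t Ht. rewrite <- F1 by auto. assert (Hm := Rmax_Cmod (w t)). assert (Hb := HB t Ht).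
    assert (Rabs (fst (w t)) <= Rmax (Rabs (fst (w t))) (Rabs (snd (w t)))) by apply Rmax_l. lra. }
  assert (B2 : forall t, 0 <= t -> Rabs ((L1 + P2 * t / (2 * c)) * exp (c * t) + (L2 - Q2 * t / (2 * c)) * exp (- (c * t))) <= B).
  { intros t Ht. rewrite <- F2 by auto. assert (Hm := Rmax_Cmod (w t)). assert (Hb := HB t Ht).
    assert (Rabs (snd (w t)) <= Rmax (Rabs (fst (w t))) (Rabs (snd (w t)))) by apply Rmax_r. lra. }
  destruct (bnd_growth _ _ _ _ _ _ Hc B1) as [-> ->].
  destruct (bnd_growth _ _ _ _ _ _ Hc B2) as [-> ->].
  split. reflexivity.
  assert (Z1 := F1 0 (Rle_refl 0)). assert (Z2 := F2 0 (Rle_refl 0)).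
  replace (- (c * 0)) with 0 in Z1, Z2 by ring. replace (c * 0) with 0 in Z1, Z2 by ring. rewrite exp_0 in Z1, Z2.
  intros t Ht. unfold expd. apply injective_projections; simpl.
  - rewrite F1 by auto. rewrite Z1. field. lra.
  - rewrite F2 by auto. rewrite Z2. field. lra.
Qed.

Lemma gen2C (w : R -> C) (c : R) : 0 < c -> smoothC w ->
  (forall t, 0 < t -> jet w t 2%nat = Cmult (RtoC (c ^ 2)) (w t)) ->
  exists A B, forall t, 0 <= t -> w t = expg A B c t.
Proof.
  intros Hc Hw Hode. apply smoothC_Sm in Hw as [W1 W2].
  assert (O1 : forall t, 0 < t -> Derive (Derive (fun s => fst (w s))) t = c ^ 2 * fst (w t) + 0 * exp (c * t) + 0 * exp (- (c * t))).
  { intros t Ht. change (Derive (Derive (fun s => fst (w s))) t) with (fst (jet w t 2%nat)). rewrite Hode by auto. simpl. ring. }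
  assert (O2 : forall t, 0 < t -> Derive (Derive (fun s => snd (w s))) t = c ^ 2 * snd (w t) + 0 * exp (c * t) + 0 * exp (- (c * t))).
  { intros t Ht. change (Derive (Derive (fun s => snd (w s))) t) with (snd (jet w t 2%nat)). rewrite Hode by auto. simpl. ring. }
  destruct (ode2 _ c 0 0 Hc W1 O1) as [K1 [K2 F1]].
  destruct (ode2 _ c 0 0 Hc W2 O2) as [L1 [L2 F2]].
  exists (K1, L1), (K2, L2). intros t Ht. unfold expg. apply injective_projections; simpl.
  - rewrite F1 by auto. field. lra.
  - rewrite F2 by auto. field. lra.
Qed.


Definition Sx (g0 h0 g1 h1 : C) (J0 J1 : nat -> C) (p : nat) : C :=
  Cplus (Cplus (Cmult g0 (J0 p)) (Cmult h0 (J0 (S p)))) (Cplus (Cmult g1 (J1 p)) (Cmult h1 (J1 (S p)))).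

Definition bco (c : R) (q k B : C) : C :=
  Cmult (RtoC (- / (2 * c))) (Copp (Cmult (Cminus q (Cmult (RtoC c) k)) B)).

Lemma edge (w0 w1 : R -> C) (c Bd : R) (g0 h0 g1 h1 q0 k0 q1 k1 : C) :
  0 < c -> smoothC w0 -> smoothC w1 ->
  (forall t, 0 <= t -> Cmod (w0 t) <= Bd) -> (forall t, 0 <= t -> Cmod (w1 t) <= Bd) ->
  Cplus (Cmult h0 k0) (Cmult h1 k1) = RtoC 1 ->
  Cplus (Cplus (Cmult g0 k0) (Cmult h0 q0)) (Cplus (Cmult g1 k1) (Cmult h1 q1)) = RtoC 0 ->
  Cplus (Cmult g0 q0) (Cmult g1 q1) = RtoC (- c ^ 2) ->
  (forall t p, 0 < t -> Cplus (Cminus (jet w0 t (S (S p))) (Cmult (RtoC (c ^ 2)) (jet w0 t p)))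
      (Cplus (Cmult q0 (Sx g0 h0 g1 h1 (jet w0 t) (jet w1 t) p)) (Cmult k0 (Sx g0 h0 g1 h1 (jet w0 t) (jet w1 t) (S p)))) = RtoC 0) ->
  (forall t p, 0 < t -> Cplus (Cminus (jet w1 t (S (S p))) (Cmult (RtoC (c ^ 2)) (jet w1 t p)))
      (Cplus (Cmult q1 (Sx g0 h0 g1 h1 (jet w0 t) (jet w1 t) p)) (Cmult k1 (Sx g0 h0 g1 h1 (jet w0 t) (jet w1 t) (S p)))) = RtoC 0) ->
  exists B : C,
    (forall t, 0 <= t -> w0 t = expd (w0 0) (bco c q0 k0 B) c t) /\
    (forall t, 0 <= t -> w1 t = expd (w1 0) (bco c q1 k1 B) c t) /\
    B = Cplus (Cplus (Cmult (Cminus g0 (Cmult (RtoC c) h0)) (w0 0)) (Cmult h0 (bco c q0 k0 B)))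
              (Cplus (Cmult (Cminus g1 (Cmult (RtoC c) h1)) (w1 0)) (Cmult h1 (bco c q1 k1 B))).
Proof.
  intros Hc S0 S1 B0 B1 I0 I1 I2 R0 R1.
  pose (s := addS FM (addS FM (smulS FM g0 w0) (smulS FM h0 (Cderive w0)))
                     (addS FM (smulS FM g1 w1) (smulS FM h1 (Cderive w1)))).
  assert (Ss : smoothC s).
  { unfold s. apply smoothC_add; apply smoothC_add; apply smoothC_mul; auto; apply smoothC_deriv; auto. }
  assert (Js : forall t p, jet s t p = Sx g0 h0 g1 h1 (jet w0 t) (jet w1 t) p).
  { intros t p. unfold s.
    assert (D0 := smoothC_deriv _ S0). assert (D1 := smoothC_deriv _ S1).
    rewrite jet_add by (apply smoothC_add; apply smoothC_mul; auto).
    rewrite !jet_add by (apply smoothC_mul; auto).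
    rewrite !jet_mul by auto. rewrite !jet_deriv. reflexivity. }
  assert (Hs2 : forall t, 0 < t -> jet s t 2%nat = Cmult (RtoC (c ^ 2)) (s t)).
  { intros t Ht. replace (s t) with (jet s t 0%nat) by apply jet0. rewrite !Js.
    assert (E0 := R0 t 0%nat Ht). assert (E1 := R0 t 1%nat Ht).
    assert (F0 := R1 t 0%nat Ht). assert (F1 := R1 t 1%nat Ht).
    set (J0 := jet w0 t) in *. set (J1 := jet w1 t) in *.
    set (S0' := Sx g0 h0 g1 h1 J0 J1 0%nat) in *.
    set (S1' := Sx g0 h0 g1 h1 J0 J1 1%nat) in *.
    set (S2' := Sx g0 h0 g1 h1 J0 J1 2%nat) in *.
    assert (Id : Cplus (Cplus (Cmult g0 (Cplus (Cminus (J0 2%nat) (Cmult (RtoC (c ^ 2)) (J0 0%nat)))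
      (Cplus (Cmult q0 S0') (Cmult k0 S1')))) (Cmult h0 (Cplus (Cminus (J0 3%nat) (Cmult (RtoC (c ^ 2)) (J0 1%nat)))
      (Cplus (Cmult q0 S1') (Cmult k0 S2')))))
      (Cplus (Cmult g1 (Cplus (Cminus (J1 2%nat) (Cmult (RtoC (c ^ 2)) (J1 0%nat)))
      (Cplus (Cmult q1 S0') (Cmult k1 S1')))) (Cmult h1 (Cplus (Cminus (J1 3%nat) (Cmult (RtoC (c ^ 2)) (J1 1%nat)))
      (Cplus (Cmult q1 S1') (Cmult k1 S2')))))
      = Cplus (Cplus (Cminus S2' (Cmult (RtoC (c ^ 2)) S0')) (Cmult (Cplus (Cmult g0 q0) (Cmult g1 q1)) S0'))
          (Cplus (Cmult (Cplus (Cplus (Cmult g0 k0) (Cmult h0 q0)) (Cplus (Cmult g1 k1) (Cmult h1 q1))) S1')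
                 (Cmult (Cplus (Cmult h0 k0) (Cmult h1 k1)) S2'))).
    { unfold S0', S1', S2', Sx. ring. }
    rewrite E0, E1, F0, F1, I0, I1, I2 in Id.
    assert (E : Cmult (RtoC 2) (Cminus S2' (Cmult (RtoC (c ^ 2)) S0')) = RtoC 0).
    { transitivity (Cplus (Cplus (Cminus S2' (Cmult (RtoC (c ^ 2)) S0')) (Cmult (RtoC (- c ^ 2)) S0'))
          (Cplus (Cmult (RtoC 0) S1') (Cmult (RtoC 1) S2'))).
      replace (RtoC (- c ^ 2)) with (Copp (RtoC (c ^ 2))) by ceq. ring.
      rewrite <- Id. ring. }
    assert (E' : Cminus S2' (Cmult (RtoC (c ^ 2)) S0') = RtoC 0).
    { transitivity (Cmult (RtoC (/ 2)) (Cmult (RtoC 2) (Cminus S2' (Cmult (RtoC (c ^ 2)) S0')))).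
      destruct (Cminus S2' (Cmult (RtoC (c ^ 2)) S0')) as [z1 z2]. apply injective_projections; simpl; field.
      rewrite E. ring. }
    clear E. rename E' into E.
    replace S2' with (Cplus (Cminus S2' (Cmult (RtoC (c ^ 2)) S0')) (Cmult (RtoC (c ^ 2)) S0')) by ring.
    rewrite E. ring. }
  destruct (gen2C s c Hc Ss Hs2) as [A [B Hsg]].
  assert (Hs1 : forall t, 0 <= t -> jet s t 1%nat = jet (expg A B c) t 1%nat).
  { intros t Ht. destruct (ex_derive_fst_smooth s t Ss). destruct (expg_deriv A B c t) as [? [? _]].
    apply jet1_right; auto. intros; apply Hsg; lra. }
  assert (Dec : forall (w : R -> C) (q k : C), smoothC w -> (forall t, 0 <= t -> Cmod (w t) <= Bd) ->
     (forall t p, 0 < t -> Cplus (Cminus (jet w t (S (S p))) (Cmult (RtoC (c ^ 2)) (jet w t p)))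
      (Cplus (Cmult q (Sx g0 h0 g1 h1 (jet w0 t) (jet w1 t) p)) (Cmult k (Sx g0 h0 g1 h1 (jet w0 t) (jet w1 t) (S p)))) = RtoC 0) ->
     forall t, 0 <= t -> w t = expd (w 0) (bco c q k B) c t).
  { intros w q k Sw Bw Rw.
    refine (proj2 (decayC w c Bd (Copp (Cmult (Cplus q (Cmult (RtoC c) k)) A)) (Copp (Cmult (Cminus q (Cmult (RtoC c) k)) B)) Hc Sw Bw _)).
    intros t Ht. assert (E := Rw t 0%nat Ht). rewrite <- !Js in E.
    rewrite !jet0 in E. rewrite Hs1 in E by lra. rewrite Hsg in E by lra.
    rewrite (proj2 (proj2 (expg_deriv A B c t))) in E.
    set (J2 := jet w t 2%nat) in *.
    set (SS0 := expg A B c t) in *.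
    set (SS1 := Cminus (Cmult (Cmult (RtoC c) A) (RtoC (exp (c * t)))) (Cmult (Cmult (RtoC c) B) (RtoC (exp (- (c * t)))))) in *.
    replace J2 with (Cplus (Cplus (Cminus J2 (Cmult (RtoC (c ^ 2)) (w t))) (Cplus (Cmult q SS0) (Cmult k SS1)))
       (Cminus (Cmult (RtoC (c ^ 2)) (w t)) (Cplus (Cmult q SS0) (Cmult k SS1)))) by ring.
    rewrite E. unfold SS0, SS1, expg. ring. }
  assert (W0 := Dec w0 q0 k0 S0 B0 R0). assert (W1 := Dec w1 q1 k1 S1 B1 R1).
  set (a0 := w0 0) in *. set (a1 := w1 0) in *.
  set (b0 := bco c q0 k0 B) in *. set (b1 := bco c q1 k1 B) in *.
  assert (Sv : forall t, 0 <= t -> s t = Cplus (Cplus (Cmult g0 (expd a0 b0 c t))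
       (Cmult h0 (Cmult (Cminus b0 (Cmult (RtoC c) (Cplus a0 (Cmult b0 (RtoC t))))) (RtoC (exp (- (c * t)))))))
       (Cplus (Cmult g1 (expd a1 b1 c t))
       (Cmult h1 (Cmult (Cminus b1 (Cmult (RtoC c) (Cplus a1 (Cmult b1 (RtoC t))))) (RtoC (exp (- (c * t)))))))).
  { intros t Ht. replace (s t) with (jet s t 0%nat) by apply jet0. rewrite Js. unfold Sx.
    rewrite !jet0. rewrite <- W0, <- W1 by auto.
    destruct (ex_derive_fst_smooth w0 t S0). destruct (ex_derive_fst_smooth w1 t S1).
    destruct (expd_deriv a0 b0 c t) as [? [? E0]]. destruct (expd_deriv a1 b1 c t) as [? [? E1]].
    rewrite (jet1_right w0 (expd a0 b0 c) t), (jet1_right w1 (expd a1 b1 c) t); auto.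
    rewrite E0, E1. reflexivity.
    intros; apply W1; lra. intros; apply W0; lra. }
  assert (Tau : Cplus (Cmult (Cminus g0 (Cmult (RtoC c) h0)) b0) (Cmult (Cminus g1 (Cmult (RtoC c) h1)) b1) = RtoC 0).
  { unfold b0, b1, bco.
    transitivity (Cmult (Cmult (RtoC (- / (2 * c))) (Copp B))
      (Cplus (Cminus (Cplus (Cmult g0 q0) (Cmult g1 q1)) (Cmult (RtoC c) (Cplus (Cplus (Cmult g0 k0) (Cmult h0 q0)) (Cplus (Cmult g1 k1) (Cmult h1 q1)))))
             (Cmult (Cmult (RtoC c) (RtoC c)) (Cplus (Cmult h0 k0) (Cmult h1 k1))))). ring.
    rewrite I0, I1, I2. destruct B. apply injective_projections; simpl; ring. }
  assert (At0 := Sv 0 (Rle_refl 0)). rewrite Hsg in At0 by lra.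
  assert (At1 := Sv 1 ltac:(lra)). rewrite Hsg in At1 by lra.
  unfold expg, expd in At0, At1.
  replace (- (c * 0)) with 0 in At0 by ring. replace (c * 0) with 0 in At0 by ring. rewrite exp_0 in At0.
  rewrite Rmult_1_r in At1.
  set (sgm := Cplus (Cplus (Cmult (Cminus g0 (Cmult (RtoC c) h0)) a0) (Cmult h0 b0))
              (Cplus (Cmult (Cminus g1 (Cmult (RtoC c) h1)) a1) (Cmult h1 b1))).
  assert (E0 : Cplus A B = sgm).
  { transitivity (Cplus (Cmult A (RtoC 1)) (Cmult B (RtoC 1))).
    destruct A, B; apply injective_projections; simpl; ring.
    rewrite At0. unfold sgm. apply injective_projections; simpl; ring. }
  assert (E1 : Cplus (Cmult A (RtoC (exp c))) (Cmult B (RtoC (exp (- c)))) = Cmult sgm (RtoC (exp (- c)))).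
  { rewrite At1.
    transitivity (Cplus (Cmult sgm (RtoC (exp (- c)))) (Cmult (Cplus (Cmult (Cminus g0 (Cmult (RtoC c) h0)) b0) (Cmult (Cminus g1 (Cmult (RtoC c) h1)) b1)) (RtoC (exp (- c))))).
    - unfold sgm. apply injective_projections; simpl; field; lra.
    - rewrite Tau. ring. }
  assert (HA : A = RtoC 0).
  { assert (Hexp : exp (- c) < exp c) by (apply exp_increasing; lra).
    assert (E2 : Cmult A (RtoC (exp c - exp (- c))) = RtoC 0).
    { transitivity (Cminus (Cplus (Cmult A (RtoC (exp c))) (Cmult B (RtoC (exp (- c))))) (Cmult (Cplus A B) (RtoC (exp (- c))))).
      destruct A, B. apply injective_projections; simpl; ring.
      rewrite E1, E0. ring. }
    destruct A as [A1 A2]. apply (f_equal fst) in E2 as F1. apply (f_equal snd) in E2 as F2. simpl in F1, F2.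
    apply injective_projections; simpl; nra. }
  exists B. split; [|split].
  - apply W0.
  - apply W1.
  - transitivity sgm; [rewrite <- E0, HA; ring | reflexivity].
Qed.


Definition yv (n xi : nat -> R) : R := xi 1%nat * n 0%nat - xi 0%nat * n 1%nat + xi 2%nat * n 3%nat - xi 3%nat * n 2%nat.
Definition Kf (n xi : nat -> R) : C := Cmult Ci (Cminus (Cmult (be xi) (alb n)) (Cmult (alb xi) (be n))).

Definition e1g0 (xi : nat -> R) := Cmult Ci (al xi).
Definition e1g1 (xi : nat -> R) := Cmult Ci (beb xi).
Definition e1q0 (xi : nat -> R) := Cmult Ci (alb xi).
Definition e1q1 (xi : nat -> R) := Cmult Ci (be xi).
Definition e2g0 (xi : nat -> R) := Cmult Ci (be xi).
Definition e2g1 (xi : nat -> R) := Copp (Cmult Ci (alb xi)).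
Definition e2q0 (xi : nat -> R) := Cmult Ci (beb xi).
Definition e2q1 (xi : nat -> R) := Copp (Cmult Ci (al xi)).

Lemma RtoC_mult_0 (r : R) (z : C) : r <> 0 -> Cmult (RtoC r) z = RtoC 0 -> z = RtoC 0.
Proof.
  intros Hr H. destruct z as [z1 z2]. apply (f_equal fst) in H as H1. apply (f_equal snd) in H as H2.
  simpl in H1, H2. apply injective_projections; simpl.
  - replace z1 with (/ r * (r * z1 - 0 * z2)) by (field; auto). rewrite H1. ring.
  - replace z2 with (/ r * (r * z2 + 0 * z1)) by (field; auto). rewrite H2. ring.
Qed.

Section Alg.
Variables (n xi : nat -> R) (c : R).
Hypothesis Hn : dot4 n n = 1.
Hypothesis Hxn : dot4 xi n = 0.
Hypothesis Hc2 : c ^ 2 = dot4 xi xi.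
Hypothesis Hc : 0 < c.

Ltac cpe := unfold Kf, yv, al, alb, be, beb; apply injective_projections; simpl.

Lemma fN : Cplus (Cmult (al n) (alb n)) (Cmult (beb n) (be n)) = RtoC 1.
Proof. cpe. transitivity (dot4 n n). unfold dot4; ring. auto. ring. Qed.

Lemma fKb : Cplus (Cmult (Cminus (Cmult Ci (al xi)) (Cmult (RtoC c) (al n))) (beb n))
                  (Cmult (Cminus (Cmult Ci (beb xi)) (Cmult (RtoC c) (beb n))) (Copp (al n))) = Cconj (Kf n xi).
Proof. cpe; ring. Qed.

Lemma fKmod : Cmod (Kf n xi) ^ 2 + yv n xi ^ 2 = c ^ 2.
Proof.
  rewrite Cmod2_alt. rewrite Hc2. transitivity (dot4 n n * dot4 xi xi - (dot4 xi n) ^ 2).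
  unfold Kf, yv, al, alb, be, beb, dot4, Re, Im. simpl. ring.
  rewrite Hn, Hxn. ring.
Qed.

Lemma fKle : Cmod (Kf n xi) <= c.
Proof.
  assert (H := fKmod). assert (0 <= Cmod (Kf n xi)) by apply Cmod_ge_0. nra.
Qed.

Lemma fyle : Rabs (yv n xi) <= c.
Proof.
  assert (H := fKmod). assert (0 <= Cmod (Kf n xi)) by apply Cmod_ge_0.
  apply Rabs_le. split; nra.
Qed.

Lemma f_rrb : Cplus (Cmult (Cminus (Cmult Ci (al xi)) (Cmult (RtoC c) (al n))) (alb n))
                   (Cmult (Cminus (Cmult Ci (beb xi)) (Cmult (RtoC c) (beb n))) (be n)) = RtoC (yv n xi - c).
Proof.
  cpe. transitivity (yv n xi - c * dot4 n n). unfold yv, dot4; ring. rewrite Hn; unfold yv; ring.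
  transitivity (dot4 xi n). unfold dot4; ring. rewrite Hxn. ring.
Qed.

Lemma f_rpp : Cplus (Cmult (Cminus (Cmult Ci (be xi)) (Cmult (RtoC c) (be n))) (beb n))
                   (Cmult (Cminus (Cmult Ci (alb xi)) (Cmult (RtoC c) (alb n))) (al n)) = RtoC (- yv n xi - c).
Proof.
  cpe. transitivity (- yv n xi - c * dot4 n n). unfold yv, dot4; ring. rewrite Hn; unfold yv; ring.
  transitivity (dot4 xi n). unfold dot4; ring. rewrite Hxn. ring.
Qed.

Lemma D1_form (J : nat -> nat -> C) j : D1 _ JM (dj n xi) J j 0%nat =
  Cplus (Cminus (Cminus (Copp (Cplus (Cmult (Cmult Ci (al xi)) (J (2 * j)%nat 0%nat)) (Cmult (al n) (J (2 * j)%nat 1%nat))))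
                        (Cplus (Cmult (Cmult Ci (beb xi)) (J (2 * j + 1)%nat 0%nat)) (Cmult (beb n) (J (2 * j + 1)%nat 1%nat))))
                (Copp (Cplus (Cmult (Cmult Ci (be xi)) (J (2 * j + 2)%nat 0%nat)) (Cmult (be n) (J (2 * j + 2)%nat 1%nat)))))
        (Copp (Cplus (Cmult (Cmult Ci (alb xi)) (J (2 * j + 3)%nat 0%nat)) (Cmult (alb n) (J (2 * j + 3)%nat 1%nat)))).
Proof.
  unfold D1, subS, negS. cbn [addS smulS JM].
  rewrite dz0_dj, dz1_dj, dzb0_dj, dzb1_dj. rewrite RtoC_m1. ring.
Qed.

Lemma row_mid (J : nat -> nat -> C) j (xm x0 x1 : C) :
  J (2 * j)%nat 0%nat = Cminus (Cmult (alb n) x0) (Cmult (beb n) xm) ->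
  J (2 * j + 1)%nat 0%nat = Cplus (Cmult (be n) x0) (Cmult (al n) xm) ->
  J (2 * j + 2)%nat 0%nat = Cminus (Cmult (alb n) x1) (Cmult (beb n) x0) ->
  J (2 * j + 3)%nat 0%nat = Cplus (Cmult (be n) x1) (Cmult (al n) x0) ->
  J (2 * j)%nat 1%nat = Cmult (RtoC (- c)) (J (2 * j)%nat 0%nat) ->
  J (2 * j + 1)%nat 1%nat = Cmult (RtoC (- c)) (J (2 * j + 1)%nat 0%nat) ->
  J (2 * j + 2)%nat 1%nat = Cmult (RtoC (- c)) (J (2 * j + 2)%nat 0%nat) ->
  J (2 * j + 3)%nat 1%nat = Cmult (RtoC (- c)) (J (2 * j + 3)%nat 0%nat) ->
  D1 _ JM (dj n xi) J j 0%nat = Cplus (Cplus (Cmult (RtoC (2 * c)) x0) (Cmult (Cconj (Kf n xi)) xm)) (Cmult (Kf n xi) x1).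
Proof.
  intros H0 H1 H2 H3 V0 V1 V2 V3. rewrite D1_form, V0, V1, V2, V3, H0, H1, H2, H3.
  rewrite <- fKb.
  transitivity (Cplus (Cplus (Cmult (Copp (Cplus
     (Cplus (Cmult (Cminus (Cmult Ci (al xi)) (Cmult (RtoC c) (al n))) (alb n))
                   (Cmult (Cminus (Cmult Ci (beb xi)) (Cmult (RtoC c) (beb n))) (be n)))
     (Cplus (Cmult (Cminus (Cmult Ci (be xi)) (Cmult (RtoC c) (be n))) (beb n))
                   (Cmult (Cminus (Cmult Ci (alb xi)) (Cmult (RtoC c) (alb n))) (al n))))) x0)
     (Cmult (Cplus (Cmult (Cminus (Cmult Ci (al xi)) (Cmult (RtoC c) (al n))) (beb n))
                  (Cmult (Cminus (Cmult Ci (beb xi)) (Cmult (RtoC c) (beb n))) (Copp (al n)))) xm))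
     (Cmult (Kf n xi) x1)).
  unfold Kf. replace (RtoC (- c)) with (Copp (RtoC c)) by ceq. ring.
  rewrite f_rrb, f_rpp. f_equal. f_equal. f_equal. ceq.
Qed.

Lemma row_0 (J : nat -> nat -> C) (x0 x1 B : C) :
  J 0%nat 0%nat = Cmult (alb n) x0 ->
  J 1%nat 0%nat = Cmult (be n) x0 ->
  J 2%nat 0%nat = Cminus (Cmult (alb n) x1) (Cmult (beb n) x0) ->
  J 3%nat 0%nat = Cplus (Cmult (be n) x1) (Cmult (al n) x0) ->
  J 2%nat 1%nat = Cmult (RtoC (- c)) (J 2%nat 0%nat) ->
  J 3%nat 1%nat = Cmult (RtoC (- c)) (J 3%nat 0%nat) ->
  J 0%nat 1%nat = Cplus (Cmult (RtoC (- c)) (J 0%nat 0%nat)) (bco c (e1q0 xi) (alb n) B) ->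
  J 1%nat 1%nat = Cplus (Cmult (RtoC (- c)) (J 1%nat 0%nat)) (bco c (e1q1 xi) (be n) B) ->
  B = Cplus (Cplus (Cmult (Cminus (e1g0 xi) (Cmult (RtoC c) (al n))) (J 0%nat 0%nat)) (Cmult (al n) (bco c (e1q0 xi) (alb n) B)))
            (Cplus (Cmult (Cminus (e1g1 xi) (Cmult (RtoC c) (beb n))) (J 1%nat 0%nat)) (Cmult (beb n) (bco c (e1q1 xi) (be n) B))) ->
  D1 _ JM (dj n xi) J 0%nat 0%nat = RtoC 0 ->
  Cplus (Cmult (RtoC ((yv n xi + c) ^ 2 + 4 * c ^ 2)) x0) (Cmult (RtoC (3 * c + yv n xi)) (Cmult (Kf n xi) x1)) = RtoC 0.
Proof.
  intros A0 A1 A2 A3 V2 V3 V0 V1 HB HD.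
  rewrite D1_form in HD. simpl (2 * 0)%nat in HD. simpl (0 + 1)%nat in HD. simpl (0 + 2)%nat in HD. simpl (0 + 3)%nat in HD.
  rewrite V0, V1, V2, V3 in HD. rewrite A0, A1, A2, A3 in HD. rewrite A0, A1 in HB.
  set (T := Cplus (Cmult (al n) (Cminus (e1q0 xi) (Cmult (RtoC c) (alb n)))) (Cmult (beb n) (Cminus (e1q1 xi) (Cmult (RtoC c) (be n))))).
  assert (fT : T = RtoC (- yv n xi - c)).
  { unfold T, e1q0, e1q1. cpe. transitivity (- yv n xi - c * dot4 n n). unfold yv, dot4; ring. rewrite Hn; unfold yv; ring.
    transitivity (dot4 xi n). unfold dot4; ring. rewrite Hxn. ring. }
  assert (EB : B = Cplus (Cmult (RtoC (yv n xi - c)) x0) (Cmult (Cmult (RtoC (- / (2 * c))) (Copp T)) B)).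
  { rewrite HB at 1. rewrite <- (f_rrb).
    unfold bco, T, e1g0, e1g1. ring. }
  assert (EP : Cplus (Cplus (Cmult (RtoC (2 * c)) x0) (Cmult (Kf n xi) x1)) (Cmult (Cmult (RtoC (/ (2 * c))) (Copp T)) B) = RtoC 0).
  { rewrite <- HD.
    transitivity (Cplus (Cplus (Cmult (Copp (Cplus
     (Cplus (Cmult (Cminus (Cmult Ci (al xi)) (Cmult (RtoC c) (al n))) (alb n))
                   (Cmult (Cminus (Cmult Ci (beb xi)) (Cmult (RtoC c) (beb n))) (be n)))
     (Cplus (Cmult (Cminus (Cmult Ci (be xi)) (Cmult (RtoC c) (be n))) (beb n))
                   (Cmult (Cminus (Cmult Ci (alb xi)) (Cmult (RtoC c) (alb n))) (al n))))) x0)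
     (Cmult (Kf n xi) x1)) (Cmult (Cmult (RtoC (/ (2 * c))) (Copp T)) B)).
    rewrite f_rrb, f_rpp. f_equal. f_equal. ceq.
    unfold Kf, bco, T, e1q0, e1q1. replace (RtoC (- c)) with (Copp (RtoC c)) by ceq.
    replace (RtoC (- / (2 * c))) with (Copp (RtoC (/ (2 * c)))) by ceq. ring. }
  rewrite fT in EB, EP.
  destruct x0 as [p1 p2], x1 as [q1 q2], B as [b1 b2]. destruct (Kf n xi) as [k1 k2].
  apply (f_equal fst) in EB as EB1. apply (f_equal snd) in EB as EB2.
  apply (f_equal fst) in EP as EP1. apply (f_equal snd) in EP as EP2.
  simpl in EB1, EB2, EP1, EP2.
  set (yy := yv n xi) in *.
  apply injective_projections; simpl.
  - transitivity ((3 * c + yy) * (2 * c * p1 + (k1 * q1 - k2 * q2) + / (2 * c) * (yy + c) * b1)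
       - (yy + c) * (b1 - ((yy - c) * p1 + - / (2 * c) * (yy + c) * b1))). field. lra.
    assert (E1z : 2 * c * p1 + (k1 * q1 - k2 * q2) + / (2 * c) * (yy + c) * b1 = 0) by (rewrite <- EP1; ring).
    assert (E2z : b1 - ((yy - c) * p1 + - / (2 * c) * (yy + c) * b1) = 0) by (rewrite EB1 at 1; ring).
    rewrite E1z, E2z. ring.
  - transitivity ((3 * c + yy) * (2 * c * p2 + (k1 * q2 + k2 * q1) + / (2 * c) * (yy + c) * b2)
       - (yy + c) * (b2 - ((yy - c) * p2 + - / (2 * c) * (yy + c) * b2))). field. lra.
    assert (E1z : 2 * c * p2 + (k1 * q2 + k2 * q1) + / (2 * c) * (yy + c) * b2 = 0) by (rewrite <- EP2; ring).
    assert (E2z : b2 - ((yy - c) * p2 + - / (2 * c) * (yy + c) * b2) = 0) by (rewrite EB2 at 1; ring).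
    rewrite E1z, E2z. ring.
Qed.

Lemma row_L (J : nat -> nat -> C) j (xm x0 B : C) :
  J (2 * j)%nat 0%nat = Cminus (Cmult (alb n) x0) (Cmult (beb n) xm) ->
  J (2 * j + 1)%nat 0%nat = Cplus (Cmult (be n) x0) (Cmult (al n) xm) ->
  J (2 * j + 2)%nat 0%nat = Copp (Cmult (beb n) x0) ->
  J (2 * j + 3)%nat 0%nat = Cmult (al n) x0 ->
  J (2 * j)%nat 1%nat = Cmult (RtoC (- c)) (J (2 * j)%nat 0%nat) ->
  J (2 * j + 1)%nat 1%nat = Cmult (RtoC (- c)) (J (2 * j + 1)%nat 0%nat) ->
  J (2 * j + 2)%nat 1%nat = Cplus (Cmult (RtoC (- c)) (J (2 * j + 2)%nat 0%nat)) (bco c (e2q0 xi) (beb n) B) ->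
  J (2 * j + 3)%nat 1%nat = Cplus (Cmult (RtoC (- c)) (J (2 * j + 3)%nat 0%nat)) (bco c (e2q1 xi) (Copp (al n)) B) ->
  B = Cplus (Cplus (Cmult (Cminus (e2g0 xi) (Cmult (RtoC c) (be n))) (J (2 * j + 2)%nat 0%nat)) (Cmult (be n) (bco c (e2q0 xi) (beb n) B)))
            (Cplus (Cmult (Cminus (e2g1 xi) (Cmult (RtoC c) (Copp (alb n)))) (J (2 * j + 3)%nat 0%nat)) (Cmult (Copp (alb n)) (bco c (e2q1 xi) (Copp (al n)) B))) ->
  D1 _ JM (dj n xi) J j 0%nat = RtoC 0 ->
  Cplus (Cmult (RtoC ((yv n xi - c) ^ 2 + 4 * c ^ 2)) x0) (Cmult (RtoC (3 * c - yv n xi)) (Cmult (Cconj (Kf n xi)) xm)) = RtoC 0.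
Proof.
  intros A0 A1 A2 A3 V0 V1 V2 V3 HB HD.
  rewrite D1_form in HD.
  rewrite V0, V1, V2, V3 in HD. rewrite A0, A1, A2, A3 in HD. rewrite A2, A3 in HB.
  set (T := Cplus (Cmult (be n) (Cminus (e2q0 xi) (Cmult (RtoC c) (beb n)))) (Cmult (Copp (alb n)) (Cminus (e2q1 xi) (Cmult (RtoC c) (Copp (al n)))))).
  assert (fT : T = RtoC (yv n xi - c)).
  { unfold T, e2q0, e2q1. cpe. transitivity (yv n xi - c * dot4 n n). unfold yv, dot4; ring. rewrite Hn; unfold yv; ring.
    first [transitivity (dot4 xi n); [unfold dot4; ring|rewrite Hxn; ring] | transitivity (- dot4 xi n); [unfold dot4; ring | rewrite Hxn; ring]]. }
  assert (EB : B = Cplus (Cmult (RtoC (yv n xi + c)) x0) (Cmult (Cmult (RtoC (- / (2 * c))) (Copp T)) B)).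
  { rewrite HB at 1. replace (RtoC (yv n xi + c)) with (Copp (RtoC (- yv n xi - c))) by ceq. rewrite <- f_rpp.
    unfold bco, T, e2g0, e2g1. ring. }
  assert (EP : Cplus (Cplus (Cmult (RtoC (2 * c)) x0) (Cmult (Cconj (Kf n xi)) xm)) (Cmult (Cmult (RtoC (/ (2 * c))) T) B) = RtoC 0).
  { rewrite <- HD. rewrite <- fKb.
    transitivity (Cplus (Cplus (Cmult (Copp (Cplus
     (Cplus (Cmult (Cminus (Cmult Ci (al xi)) (Cmult (RtoC c) (al n))) (alb n))
                   (Cmult (Cminus (Cmult Ci (beb xi)) (Cmult (RtoC c) (beb n))) (be n)))
     (Cplus (Cmult (Cminus (Cmult Ci (be xi)) (Cmult (RtoC c) (be n))) (beb n))
                   (Cmult (Cminus (Cmult Ci (alb xi)) (Cmult (RtoC c) (alb n))) (al n))))) x0)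
     (Cmult (Cplus (Cmult (Cminus (Cmult Ci (al xi)) (Cmult (RtoC c) (al n))) (beb n))
                  (Cmult (Cminus (Cmult Ci (beb xi)) (Cmult (RtoC c) (beb n))) (Copp (al n)))) xm))
     (Cmult (Cmult (RtoC (/ (2 * c))) T) B)).
    rewrite f_rrb, f_rpp. f_equal. f_equal. ceq.
    unfold bco, T, e2q0, e2q1. replace (RtoC (- c)) with (Copp (RtoC c)) by ceq.
    replace (RtoC (- / (2 * c))) with (Copp (RtoC (/ (2 * c)))) by ceq. ring. }
  rewrite fT in EB, EP.
  destruct x0 as [p1 p2], xm as [q1 q2], B as [b1 b2]. destruct (Kf n xi) as [k1 k2].
  apply (f_equal fst) in EB as EB1. apply (f_equal snd) in EB as EB2.
  apply (f_equal fst) in EP as EP1. apply (f_equal snd) in EP as EP2.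
  simpl in EB1, EB2, EP1, EP2.
  set (yy := yv n xi) in *.
  apply injective_projections; simpl.
  - transitivity ((3 * c - yy) * (2 * c * p1 + (k1 * q1 + k2 * q2) + / (2 * c) * (yy - c) * b1)
       - (yy - c) * (b1 - ((yy + c) * p1 + / (2 * c) * (yy - c) * b1))). field. lra.
    assert (E1z : 2 * c * p1 + (k1 * q1 + k2 * q2) + / (2 * c) * (yy - c) * b1 = 0) by (rewrite <- EP1; ring).
    assert (E2z : b1 - ((yy + c) * p1 + / (2 * c) * (yy - c) * b1) = 0) by (rewrite EB1 at 1; ring).
    rewrite E1z, E2z. ring.
  - transitivity ((3 * c - yy) * (2 * c * p2 + (k1 * q2 - k2 * q1) + / (2 * c) * (yy - c) * b2)
       - (yy - c) * (b2 - ((yy + c) * p2 + / (2 * c) * (yy - c) * b2))). field. lra.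
    assert (E1z : 2 * c * p2 + (k1 * q2 - k2 * q1) + / (2 * c) * (yy - c) * b2 = 0) by (rewrite <- EP2; ring).
    assert (E2z : b2 - ((yy + c) * p2 + / (2 * c) * (yy - c) * b2) = 0) by (rewrite EB2 at 1; ring).
    rewrite E1z, E2z. ring.
Qed.

Ltac pzt := first [transitivity (dot4 xi n); [unfold dot4; ring|rewrite Hxn; ring]
                 | transitivity (- dot4 xi n); [unfold dot4; ring | rewrite Hxn; ring]
                 | transitivity (2 * dot4 xi n); [unfold dot4; ring|rewrite Hxn; ring]
                 | transitivity (- 2 * dot4 xi n); [unfold dot4; ring | rewrite Hxn; ring]
                 | ring].

Lemma fI1_1 : Cplus (Cplus (Cmult (e1g0 xi) (alb n)) (Cmult (al n) (e1q0 xi))) (Cplus (Cmult (e1g1 xi) (be n)) (Cmult (beb n) (e1q1 xi))) = RtoC 0.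
Proof. unfold e1g0, e1q0, e1g1, e1q1. cpe; pzt. Qed.
Lemma fI2_1 : Cplus (Cmult (e1g0 xi) (e1q0 xi)) (Cmult (e1g1 xi) (e1q1 xi)) = RtoC (- c ^ 2).
Proof. unfold e1g0, e1q0, e1g1, e1q1. cpe. transitivity (- dot4 xi xi). unfold dot4; ring. rewrite <- Hc2. simpl; ring. ring. Qed.
Lemma fN2 : Cplus (Cmult (be n) (beb n)) (Cmult (Copp (alb n)) (Copp (al n))) = RtoC 1.
Proof. cpe. transitivity (dot4 n n). unfold dot4; ring. auto. ring. Qed.
Lemma fI1_2 : Cplus (Cplus (Cmult (e2g0 xi) (beb n)) (Cmult (be n) (e2q0 xi))) (Cplus (Cmult (e2g1 xi) (Copp (al n))) (Cmult (Copp (alb n)) (e2q1 xi))) = RtoC 0.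
Proof. unfold e2g0, e2q0, e2g1, e2q1. cpe; pzt. Qed.
Lemma fI2_2 : Cplus (Cmult (e2g0 xi) (e2q0 xi)) (Cmult (e2g1 xi) (e2q1 xi)) = RtoC (- c ^ 2).
Proof. unfold e2g0, e2q0, e2g1, e2q1. cpe. transitivity (- dot4 xi xi). unfold dot4; ring. rewrite <- Hc2. simpl; ring. ring. Qed.

Lemma Bzero1 (B : C) :
  B = Cplus (Cplus (Cmult (Cminus (e1g0 xi) (Cmult (RtoC c) (al n))) (RtoC 0)) (Cmult (al n) (bco c (e1q0 xi) (alb n) B)))
            (Cplus (Cmult (Cminus (e1g1 xi) (Cmult (RtoC c) (beb n))) (RtoC 0)) (Cmult (beb n) (bco c (e1q1 xi) (be n) B))) ->
  B = RtoC 0.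
Proof.
  intros HB.
  set (T := Cplus (Cmult (al n) (Cminus (e1q0 xi) (Cmult (RtoC c) (alb n)))) (Cmult (beb n) (Cminus (e1q1 xi) (Cmult (RtoC c) (be n))))).
  assert (fT : T = RtoC (- yv n xi - c)).
  { unfold T, e1q0, e1q1. cpe. transitivity (- yv n xi - c * dot4 n n). unfold yv, dot4; ring. rewrite Hn; unfold yv; ring. pzt. }
  assert (EB : B = Cmult (Cmult (RtoC (- / (2 * c))) (Copp T)) B).
  { rewrite HB at 1. unfold bco, T. ring. }
  rewrite fT in EB. assert (Hy := fyle). assert (Hy2 : - c <= yv n xi <= c) by (split; [apply Ropp_le_cancel; rewrite Ropp_involutive; eapply Rle_trans; [apply Rle_abs | rewrite Rabs_Ropp; exact Hy] | eapply Rle_trans; [apply Rle_abs | exact Hy]]).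
  assert (E : Cmult (RtoC ((3 * c + yv n xi) / (2 * c))) B = RtoC 0).
  { transitivity (Cminus B (Cmult (Cmult (RtoC (- / (2 * c))) (Copp (RtoC (- yv n xi - c)))) B)).
    destruct B; apply injective_projections; simpl; field; lra.
    rewrite <- EB. ring. }
  apply (RtoC_mult_0 ((3 * c + yv n xi) / (2 * c))); auto.
  apply Rgt_not_eq. apply Rdiv_lt_0_compat; lra.
Qed.

Lemma Bzero2 (B : C) :
  B = Cplus (Cplus (Cmult (Cminus (e2g0 xi) (Cmult (RtoC c) (be n))) (RtoC 0)) (Cmult (be n) (bco c (e2q0 xi) (beb n) B)))
            (Cplus (Cmult (Cminus (e2g1 xi) (Cmult (RtoC c) (Copp (alb n)))) (RtoC 0)) (Cmult (Copp (alb n)) (bco c (e2q1 xi) (Copp (al n)) B))) ->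
  B = RtoC 0.
Proof.
  intros HB.
  set (T := Cplus (Cmult (be n) (Cminus (e2q0 xi) (Cmult (RtoC c) (beb n)))) (Cmult (Copp (alb n)) (Cminus (e2q1 xi) (Cmult (RtoC c) (Copp (al n)))))).
  assert (fT : T = RtoC (yv n xi - c)).
  { unfold T, e2q0, e2q1. cpe. transitivity (yv n xi - c * dot4 n n). unfold yv, dot4; ring. rewrite Hn; unfold yv; ring. pzt. }
  assert (EB : B = Cmult (Cmult (RtoC (- / (2 * c))) (Copp T)) B).
  { rewrite HB at 1. unfold bco, T. ring. }
  rewrite fT in EB. assert (Hy := fyle). assert (Hy2 : - c <= yv n xi <= c) by (split; [apply Ropp_le_cancel; rewrite Ropp_involutive; eapply Rle_trans; [apply Rle_abs | rewrite Rabs_Ropp; exact Hy] | eapply Rle_trans; [apply Rle_abs | exact Hy]]).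
  assert (E : Cmult (RtoC ((3 * c - yv n xi) / (2 * c))) B = RtoC 0).
  { transitivity (Cminus B (Cmult (Cmult (RtoC (- / (2 * c))) (Copp (RtoC (yv n xi - c)))) B)).
    destruct B; apply injective_projections; simpl; field; lra.
    rewrite <- EB. ring. }
  apply (RtoC_mult_0 ((3 * c - yv n xi) / (2 * c))); auto.
  apply Rgt_not_eq. apply Rdiv_lt_0_compat; lra.
Qed.
End Alg.


Lemma D0star_ext {S} (M : CMod S) k d (u v : nat -> S) c :
  (forall r, (r < 2 * k)%nat -> u r = v r) -> D0star M k d u c = D0star M k d v c.
Proof. intros H. unfold D0star. f_equal. apply sumS_ext. intros l _. apply sumS_ext. intros r Hr. rewrite H; auto. Qed.

Lemma D1star_ext {S} (M : CMod S) k d (u v : nat -> S) c :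
  (forall r, (r < k - 1)%nat -> u r = v r) -> D1star M k d u c = D1star M k d v c.
Proof. intros H. unfold D1star. f_equal. apply sumS_ext. intros l _. apply sumS_ext. intros r Hr. rewrite H; auto. Qed.

Lemma D1_ext {S} (M : CMod S) k d (u v : nat -> S) j :
  (forall r, (r < 2 * k)%nat -> u r = v r) -> (j < k - 1)%nat -> D1 S M d u j = D1 S M d v j.
Proof. intros H Hj. unfold D1. rewrite !H by lia. reflexivity. Qed.

Lemma box1_ext {S} (M : CMod S) k d (u v : nat -> S) m :
  (forall r, (r < 2 * k)%nat -> u r = v r) -> box1 M k d u m = box1 M k d v m.
Proof.
  intros H. unfold box1. f_equal.
  - f_equal. apply functional_extensionality. intros c. apply D0star_ext; auto.
  - apply D1star_ext. intros r Hr. apply (D1_ext M k); auto.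
Qed.

Definition extu (k : nat) (u : nat -> R -> C) (r : nat) : R -> C :=
  if r <? 2 * k then u r else (fun _ => RtoC 0).

Lemma extu_eq k u r : (r < 2 * k)%nat -> extu k u r = u r.
Proof. intros H. unfold extu. destruct (Nat.ltb_spec r (2 * k)); [reflexivity|lia]. Qed.

Lemma extu_smooth k u : (forall m, (m < 2 * k)%nat -> smoothC (u m)) -> forall r, smoothC (extu k u r).
Proof. intros H r. unfold extu. destruct (Nat.ltb_spec r (2 * k)). auto. apply smoothC_zero. Qed.

Lemma ZZ_eq n xi c W p : dot4 n n = 1 -> dot4 xi n = 0 -> c ^ 2 = dot4 xi xi ->
  ZZ (dj n xi) W p = Cminus (W (S (S p))) (Cmult (RtoC (c ^ 2)) (W p)).
Proof.
  intros Hn Hxn Hc2. rewrite ZZ_form, Hn, Hxn, <- Hc2.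
  generalize (W p) (W (S p)) (W (S (S p))). intros. ceq.
Qed.

Lemma Sop_Sx n xi J0 J1 p : Sop (dj n xi) J0 J1 p = Sx (e1g0 xi) (al n) (e1g1 xi) (beb n) J0 J1 p.
Proof. unfold Sop, Sx, e1g0, e1g1. rewrite dz0_dj, dzb1_dj. reflexivity. Qed.

Lemma Sop'_Sx n xi J0 J1 p : Sop' (dj n xi) J0 J1 p = Sx (e2g0 xi) (be n) (e2g1 xi) (Copp (alb n)) J0 J1 p.
Proof. unfold Sop', Sx, e2g0, e2g1. rewrite dz1_dj, dzb0_dj. ring. Qed.

Lemma box_L0' k n xi J p : (3 <= k)%nat ->
  box1 JM k (dj n xi) J (2 * k - 2) p =
  Copp (Cplus (ZZ (dj n xi) (J (2 * k - 2)%nat) p)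
     (dzb1 _ JM (dj n xi) (Sop' (dj n xi) (J (2 * k - 2)%nat) (J (2 * k - 1)%nat)) p)).
Proof.
  intros Hk. destruct k as [|[|j]]; try lia.
  replace (2 * S (S j) - 2)%nat with (2 * S j)%nat by lia.
  replace (2 * S (S j) - 1)%nat with (2 * S j + 1)%nat by lia.
  apply box_L0. lia.
Qed.

Lemma box_L1' k n xi J p : (3 <= k)%nat ->
  box1 JM k (dj n xi) J (2 * k - 1) p =
  Copp (Cminus (ZZ (dj n xi) (J (2 * k - 1)%nat) p)
     (dz0 _ JM (dj n xi) (Sop' (dj n xi) (J (2 * k - 2)%nat) (J (2 * k - 1)%nat)) p)).
Proof.
  intros Hk. destruct k as [|[|j]]; try lia.
  replace (2 * S (S j) - 2)%nat with (2 * S j)%nat by lia.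
  replace (2 * S (S j) - 1)%nat with (2 * S j + 1)%nat by lia.
  apply box_L1. lia.
Qed.

Lemma Copp_zero (z : C) : Copp z = RtoC 0 -> z = RtoC 0.
Proof. intros H. replace z with (Copp (Copp z)) by ring. rewrite H. ceq. Qed.

Lemma jet1_of_expd (w : R -> C) (a b : C) (c : R) : smoothC w -> (forall t, 0 <= t -> w t = expd a b c t) ->
  w 0 = a /\ jet w 0 1%nat = Cplus (Cmult (RtoC (- c)) (w 0)) b.
Proof.
  intros Hw H.
  assert (Ha : w 0 = a).
  { rewrite H by lra. unfold expd. replace (- (c * 0)) with 0 by ring. rewrite exp_0.
    destruct a, b; apply injective_projections; simpl; ring. }
  split; auto.
  destruct (ex_derive_fst_smooth w 0 Hw). destruct (expd_deriv a b c 0) as [? [? E]].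
  rewrite (jet1_right w (expd a b c) 0); auto. rewrite E, Ha.
  replace (- (c * 0)) with 0 by ring. rewrite exp_0.
  destruct a, b; apply injective_projections; simpl; ring.
Qed.


Theorem mainTheorem7 :
  forall (k : nat), (3 <= k)%nat ->
  forall (n xi : nat -> R),
    dot4 n n = 1 ->
    dot4 xi n = 0 ->
    (exists l, (l < 4)%nat /\ xi l <> 0) ->
    SL_condition k n xi.
Proof.
  intros k Hk n xi Hn Hxn Hxi u Hsm [Bd HB] Hbox Hbc1 Hbc2.
  assert (HX : 0 < dot4 xi xi).
  { destruct Hxi as [l [Hl Hl0]]. unfold dot4.
    assert (0 < xi l * xi l) by (apply Rsqr_pos_lt; auto).
    assert (0 <= xi 0%nat * xi 0%nat) by nra. assert (0 <= xi 1%nat * xi 1%nat) by nra.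
    assert (0 <= xi 2%nat * xi 2%nat) by nra. assert (0 <= xi 3%nat * xi 3%nat) by nra.
    destruct l as [|[|[|[|l]]]]; try lia; lra. }
  set (c := sqrt (dot4 xi xi)).
  assert (Hc : 0 < c) by (apply sqrt_lt_R0; auto).
  assert (Hc2 : c ^ 2 = dot4 xi xi) by (unfold c; rewrite pow2_sqrt; lra).
  set (ut := extu k u).
  assert (Hus : forall r, smoothC (ut r)) by (apply extu_smooth; auto).
  assert (HBd : 0 <= Bd).
  { assert (H := HB 0%nat 0 ltac:(lia) (Rle_refl 0)). assert (0 <= Cmod (u 0%nat 0)) by apply Cmod_ge_0. lra. }
  assert (HuB : forall r t, 0 <= t -> Cmod (ut r t) <= Bd).
  { intros r t Ht. unfold ut, extu. destruct (Nat.ltb_spec r (2 * k)). auto. rewrite Cmod_0. auto. }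
  assert (Hbox' : forall m t, (m < 2 * k)%nat -> 0 <= t -> box1 FM k (dtan n xi) ut m t = RtoC 0).
  { intros m t Hm Ht. rewrite (box1_ext FM k (dtan n xi) ut u). apply Hbox; auto.
    intros r Hr. unfold ut. apply extu_eq; auto. }
  assert (HF1 : forall m t, (m < 2 * k)%nat -> 0 <= t ->
     box1 JM k (dj n xi) (fun r => jet (ut r) t) m 0%nat = RtoC 0).
  { intros m t Hm Ht. rewrite <- (proj2 (hom_box1 n xi t k ut m Hus)). rewrite jet0. auto. }
  assert (HF2 : forall m t p, (m < 2 * k)%nat -> 0 < t ->
     box1 JM k (dj n xi) (fun r => jet (ut r) t) m p = RtoC 0).
  { intros m t p Hm Ht. rewrite <- (proj2 (hom_box1 n xi t k ut m Hus)).
    rewrite (jet_loc _ (fun _ => RtoC 0) t Ht). apply jet_zero_fun.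
    intros s Hs. apply Hbox'; auto. lra. }
  assert (HMid : forall m, (2 <= m)%nat -> (m <= 2 * k - 3)%nat ->
     forall t, 0 <= t -> ut m t = expd (ut m 0) (RtoC 0) c t).
  { intros m Hm1 Hm2.
    assert (Hz : forall t, 0 <= t -> ZZ (dj n xi) (jet (ut m) t) 0%nat = RtoC 0).
    { intros t Ht. assert (E := HF1 m t ltac:(lia) Ht).
      destruct (parity m) as [q [[Em _]|[Em _]]]; subst m; destruct q as [|j]; try lia.
      - rewrite box_mid_even in E by lia. apply (RtoC_mult_0 (-2)); auto. lra.
      - rewrite box_mid_odd in E by lia. apply (RtoC_mult_0 (-2)); auto. lra. }
    destruct (decayC (ut m) c Bd (RtoC 0) (RtoC 0) Hc (Hus m) (HuB m)) as [_ Hd].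
    { intros t Ht. assert (E := Hz t ltac:(lra)). rewrite (ZZ_eq n xi c) in E by auto.
      rewrite jet0 in E. replace (jet (ut m) t 2%nat) with
        (Cplus (Cminus (jet (ut m) t 2%nat) (Cmult (RtoC (c ^ 2)) (ut m t))) (Cmult (RtoC (c ^ 2)) (ut m t))) by ring.
      rewrite E. ceq. }
    intros t Ht. rewrite Hd by auto. f_equal. ceq. }
  destruct (edge (ut 0%nat) (ut 1%nat) c Bd (e1g0 xi) (al n) (e1g1 xi) (beb n) (e1q0 xi) (alb n) (e1q1 xi) (be n)
     Hc (Hus 0%nat) (Hus 1%nat) (HuB 0%nat) (HuB 1%nat) (fN n Hn) (fI1_1 n xi Hxn) (fI2_1 xi c Hc2))
    as [B1 [W0 [W1 HB1]]].
  { intros t p Ht. assert (E := HF2 (2 * 0)%nat t p ltac:(lia) Ht).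
    rewrite box_0 in E by auto. apply Copp_zero in E.
    rewrite (ZZ_eq n xi c) in E by auto. rewrite dzb0_dj, !Sop_Sx in E. exact E. }
  { intros t p Ht. assert (E := HF2 (2 * 0 + 1)%nat t p ltac:(lia) Ht).
    rewrite box_1 in E by auto. apply Copp_zero in E.
    rewrite (ZZ_eq n xi c) in E by auto. rewrite dz1_dj, !Sop_Sx in E. exact E. }
  destruct (edge (ut (2 * k - 2)%nat) (ut (2 * k - 1)%nat) c Bd (e2g0 xi) (be n) (e2g1 xi) (Copp (alb n)) (e2q0 xi) (beb n) (e2q1 xi) (Copp (al n))
     Hc (Hus _) (Hus _) (HuB _) (HuB _) (fN2 n Hn) (fI1_2 n xi Hxn) (fI2_2 xi c Hc2))
    as [B2 [W2 [W3 HB2]]].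
  { intros t p Ht. assert (E := HF2 (2 * k - 2)%nat t p ltac:(lia) Ht).
    rewrite box_L0' in E by auto. apply Copp_zero in E.
    rewrite (ZZ_eq n xi c) in E by auto. rewrite dzb1_dj, !Sop'_Sx in E. exact E. }
  { intros t p Ht. assert (E := HF2 (2 * k - 1)%nat t p ltac:(lia) Ht).
    rewrite box_L1' in E by auto. apply Copp_zero in E.
    rewrite (ZZ_eq n xi c) in E by auto. rewrite dz0_dj, !Sop'_Sx in E.
    rewrite <- E. unfold e2q1. ring. }
  set (a := fun r => ut r 0).
  assert (HE1 : forall cc, (cc <= k)%nat -> D0star JM k (en n) (fun r _ => a r) cc 0%nat = RtoC 0).
  { intros cc Hcc. rewrite <- D0star_CM. rewrite <- (Hbc1 cc Hcc). apply D0star_ext.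
    intros r Hr. unfold a, ut. rewrite extu_eq; auto. }
  assert (Hz0 : Cminus (Cmult (be n) (a 0%nat)) (Cmult (alb n) (a 1%nat)) = RtoC 0).
  { assert (E := HE1 0%nat ltac:(lia)). rewrite D0star_0 in E by lia. rewrite dz1_en, dzb0_en in E. exact E. }
  assert (HzS : forall j, (S j < k)%nat -> Cplus (Cminus (Cmult (be n) (a (2 * j + 2)%nat)) (Cmult (alb n) (a (2 * j + 3)%nat)))
        (Cplus (Cmult (al n) (a (2 * j)%nat)) (Cmult (beb n) (a (2 * j + 1)%nat))) = RtoC 0).
  { intros j Hj. assert (E := HE1 (S j) ltac:(lia)). rewrite D0star_S in E by lia.
    rewrite dz1_en, dzb0_en, dz0_en, dzb1_en in E. unfold ifc in E.
    destruct (Nat.ltb_spec (S j) k); try lia. exact E. }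
  assert (Hxk : Cplus (Cmult (al n) (a (2 * (k - 1))%nat)) (Cmult (beb n) (a (2 * (k - 1) + 1)%nat)) = RtoC 0).
  { assert (E := HE1 k ltac:(lia)). replace k with (S (k - 1)) in E at 2 by lia. rewrite D0star_S in E by lia.
    rewrite dz1_en, dzb0_en, dz0_en, dzb1_en in E. unfold ifc in E.
    destruct (Nat.ltb_spec (S (k - 1)) k); try lia.
    rewrite <- E. ring. }
  set (J0 := fun r => jet (ut r) 0).
  assert (HE2 : forall cc, (cc < 2 * k)%nat ->
    D1star JM k (en n) (fun r _ => D1 _ JM (dj n xi) J0 r 0%nat) cc 0%nat = RtoC 0).
  { intros cc Hcc. rewrite <- D1star_CM. rewrite <- (Hbc2 cc Hcc). apply D1star_ext.
    intros r Hr. cbv beta.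
    assert (E1 : D1 _ FM (dtan n xi) u r = D1 _ FM (dtan n xi) ut r).
    { apply (D1_ext FM k); auto. intros i Hi. unfold ut. rewrite extu_eq; auto. }
    rewrite E1. rewrite <- (jet0 (D1 _ FM (dtan n xi) ut r) 0).
    rewrite (proj2 (hom_D1 n xi 0 ut r Hus)). reflexivity. }
  assert (HPhi : forall j, (j < k - 1)%nat -> D1 _ JM (dj n xi) J0 j 0%nat = RtoC 0).
  { intros j Hj. destruct j as [|q].
    - assert (E0 := HE2 (2 * 0)%nat ltac:(lia)). assert (E1 := HE2 (2 * 0 + 1)%nat ltac:(lia)).
      rewrite D1star_e0 in E0. rewrite D1star_o0 in E1. unfold ifc in E0, E1.
      destruct (Nat.ltb_spec 0 (k - 1)); try lia.
      rewrite dzb0_en in E0. rewrite dz1_en in E1.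
      set (P := D1 _ JM (dj n xi) J0 0%nat 0%nat) in *.
      transitivity (Cplus (Cmult (al n) (Cmult (alb n) P)) (Cmult (beb n) (Cmult (be n) P))).
      transitivity (Cmult (Cplus (Cmult (al n) (alb n)) (Cmult (beb n) (be n))) P).
      rewrite fN by auto. ring. ring. rewrite E0, E1. ring.
    - assert (E0 := HE2 (2 * S q)%nat ltac:(lia)). assert (E1 := HE2 (2 * S q + 1)%nat ltac:(lia)).
      rewrite D1star_eS in E0. rewrite D1star_oS in E1. unfold ifc in E0, E1.
      destruct (Nat.ltb_spec (S q) (k - 1)); try lia. destruct (Nat.ltb_spec q (k - 1)); try lia.
      rewrite dzb0_en, dzb1_en in E0. rewrite dz1_en, dz0_en in E1.
      set (P := D1 _ JM (dj n xi) J0 (S q) 0%nat) in *.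
      set (P' := D1 _ JM (dj n xi) J0 q 0%nat) in *.
      transitivity (Cplus (Cmult (al n) (Cminus (Cmult (alb n) P) (Cmult (beb n) P'))) (Cmult (beb n) (Cplus (Cmult (be n) P) (Cmult (al n) P')))).
      transitivity (Cmult (Cplus (Cmult (al n) (alb n)) (Cmult (beb n) (be n))) P).
      rewrite fN by auto. ring. ring. rewrite E0, E1. ring. }
  assert (Jr0 : forall r, J0 r 0%nat = a r) by (intros; unfold J0, a; apply jet0).
  assert (Vmid : forall m, (2 <= m)%nat -> (m <= 2 * k - 3)%nat -> J0 m 1%nat = Cmult (RtoC (- c)) (J0 m 0%nat)).
  { intros m H1 H2. destruct (jet1_of_expd (ut m) (ut m 0) (RtoC 0) c (Hus m) (HMid m H1 H2)) as [_ E].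
    unfold J0. rewrite E, jet0. ring. }
  assert (V0 : J0 0%nat 1%nat = Cplus (Cmult (RtoC (- c)) (J0 0%nat 0%nat)) (bco c (e1q0 xi) (alb n) B1)).
  { destruct (jet1_of_expd _ _ _ c (Hus 0%nat) W0) as [_ E]. unfold J0. rewrite E, jet0. reflexivity. }
  assert (V1 : J0 1%nat 1%nat = Cplus (Cmult (RtoC (- c)) (J0 1%nat 0%nat)) (bco c (e1q1 xi) (be n) B1)).
  { destruct (jet1_of_expd _ _ _ c (Hus 1%nat) W1) as [_ E]. unfold J0. rewrite E, jet0. reflexivity. }
  assert (V2 : J0 (2 * k - 2)%nat 1%nat = Cplus (Cmult (RtoC (- c)) (J0 (2 * k - 2)%nat 0%nat)) (bco c (e2q0 xi) (beb n) B2)).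
  { destruct (jet1_of_expd _ _ _ c (Hus _) W2) as [_ E]. unfold J0. rewrite E, jet0. reflexivity. }
  assert (V3 : J0 (2 * k - 1)%nat 1%nat = Cplus (Cmult (RtoC (- c)) (J0 (2 * k - 1)%nat 0%nat)) (bco c (e2q1 xi) (Copp (al n)) B2)).
  { destruct (jet1_of_expd _ _ _ c (Hus _) W3) as [_ E]. unfold J0. rewrite E, jet0. reflexivity. }
  set (x := fun j => Cplus (Cmult (al n) (a (2 * j)%nat)) (Cmult (beb n) (a (2 * j + 1)%nat))).
  set (zz := fun j => Cminus (Cmult (be n) (a (2 * j)%nat)) (Cmult (alb n) (a (2 * j + 1)%nat))).
  assert (HA0 : forall i, a (2 * i)%nat = Cplus (Cmult (alb n) (x i)) (Cmult (beb n) (zz i))).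
  { intros i. unfold x, zz. transitivity (Cmult (Cplus (Cmult (al n) (alb n)) (Cmult (beb n) (be n))) (a (2 * i)%nat)).
    rewrite fN by auto. ring. ring. }
  assert (HA1 : forall i, a (2 * i + 1)%nat = Cminus (Cmult (be n) (x i)) (Cmult (al n) (zz i))).
  { intros i. unfold x, zz. transitivity (Cmult (Cplus (Cmult (al n) (alb n)) (Cmult (beb n) (be n))) (a (2 * i + 1)%nat)).
    rewrite fN by auto. ring. ring. }
  assert (Hzz0 : zz 0%nat = RtoC 0) by exact Hz0.
  assert (HzzS : forall i, (1 <= i)%nat -> (i <= k - 1)%nat -> zz i = Copp (x (i - 1)%nat)).
  { intros i H1 H2. assert (E := HzS (i - 1)%nat ltac:(lia)).
    replace (2 * (i - 1) + 2)%nat with (2 * i)%nat in E by lia.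
    replace (2 * (i - 1) + 3)%nat with (2 * i + 1)%nat in E by lia.
    replace (zz i) with (Cminus (Cplus (Cminus (Cmult (be n) (a (2 * i)%nat)) (Cmult (alb n) (a (2 * i + 1)%nat)))
        (Cplus (Cmult (al n) (a (2 * (i - 1))%nat)) (Cmult (beb n) (a (2 * (i - 1) + 1)%nat)))) (x (i - 1)%nat)) by (unfold zz, x; ring).
    rewrite E. ring. }
  assert (Hxk' : x (k - 1)%nat = RtoC 0) by exact Hxk.
  assert (Hy := fyle n xi c Hn Hxn Hc2 Hc). assert (HK := fKle n xi c Hn Hxn Hc2 Hc).
  assert (R0 : Cplus (Cmult (RtoC ((yv n xi + c) ^ 2 + 4 * c ^ 2)) (x 0%nat)) (Cmult (RtoC (3 * c + yv n xi)) (Cmult (Kf n xi) (x 1%nat))) = RtoC 0).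
  { apply (row_0 n xi c Hn Hxn Hc J0 (x 0%nat) (x 1%nat) B1).
    - rewrite Jr0. change 0%nat with (2 * 0)%nat at 1. rewrite HA0, Hzz0. ring.
    - rewrite Jr0. change 1%nat with (2 * 0 + 1)%nat at 1. rewrite HA1, Hzz0. ring.
    - rewrite Jr0. change 2%nat with (2 * 1)%nat at 1. rewrite HA0, (HzzS 1%nat) by lia. simpl (1 - 1)%nat. ring.
    - rewrite Jr0. change 3%nat with (2 * 1 + 1)%nat at 1. rewrite HA1, (HzzS 1%nat) by lia. simpl (1 - 1)%nat. ring.
    - apply Vmid; lia.
    - apply Vmid; lia.
    - exact V0.
    - exact V1.
    - unfold J0. rewrite !jet0. exact HB1.
    - apply HPhi. lia. }
  assert (RM : forall j, (1 <= j)%nat -> (j <= k - 3)%nat ->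
     Cplus (Cplus (Cmult (RtoC (2 * c)) (x j)) (Cmult (Cconj (Kf n xi)) (x (j - 1)%nat))) (Cmult (Kf n xi) (x (S j))) = RtoC 0).
  { intros j H1 H2. rewrite <- (HPhi j) by lia. symmetry.
    apply (row_mid n xi c Hn Hxn J0 j).
    - rewrite Jr0, HA0, HzzS by lia. ring.
    - rewrite Jr0, HA1, HzzS by lia. ring.
    - rewrite Jr0. replace (2 * j + 2)%nat with (2 * S j)%nat by lia. rewrite HA0, (HzzS (S j)) by lia.
      replace (S j - 1)%nat with j by lia. ring.
    - rewrite Jr0. replace (2 * j + 3)%nat with (2 * S j + 1)%nat by lia. rewrite HA1, (HzzS (S j)) by lia.
      replace (S j - 1)%nat with j by lia. ring.
    - apply Vmid; lia.
    - apply Vmid; lia.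
    - apply Vmid; lia.
    - apply Vmid; lia. }
  assert (RL : Cplus (Cmult (RtoC ((yv n xi - c) ^ 2 + 4 * c ^ 2)) (x (k - 2)%nat)) (Cmult (RtoC (3 * c - yv n xi)) (Cmult (Cconj (Kf n xi)) (x (k - 3)%nat))) = RtoC 0).
  { apply (row_L n xi c Hn Hxn Hc J0 (k - 2)%nat (x (k - 3)%nat) (x (k - 2)%nat) B2).
    - rewrite Jr0, HA0, HzzS by lia. replace (k - 2 - 1)%nat with (k - 3)%nat by lia. ring.
    - rewrite Jr0, HA1, HzzS by lia. replace (k - 2 - 1)%nat with (k - 3)%nat by lia. ring.
    - rewrite Jr0. replace (2 * (k - 2) + 2)%nat with (2 * (k - 1))%nat by lia. rewrite HA0, Hxk', (HzzS (k - 1)%nat) by lia.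
      replace (k - 1 - 1)%nat with (k - 2)%nat by lia. ring.
    - rewrite Jr0. replace (2 * (k - 2) + 3)%nat with (2 * (k - 1) + 1)%nat by lia. rewrite HA1, Hxk', (HzzS (k - 1)%nat) by lia.
      replace (k - 1 - 1)%nat with (k - 2)%nat by lia. ring.
    - apply Vmid; lia.
    - apply Vmid; lia.
    - replace (2 * (k - 2) + 2)%nat with (2 * k - 2)%nat by lia. exact V2.
    - replace (2 * (k - 2) + 3)%nat with (2 * k - 1)%nat by lia. exact V3.
    - replace (2 * (k - 2) + 2)%nat with (2 * k - 2)%nat by lia. replace (2 * (k - 2) + 3)%nat with (2 * k - 1)%nat by lia.
      unfold J0. rewrite !jet0. exact HB2.
    - apply HPhi. lia. }
  assert (Hx0 := final_alg k c (yv n xi) (Kf n xi) x Hk Hc Hy HK R0 RM RL).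
  assert (Hxall : forall j, (j <= k - 1)%nat -> x j = RtoC 0).
  { intros j Hj. destruct (Nat.eq_dec j (k - 1)) as [->|]. exact Hxk'. apply Hx0. lia. }
  assert (Hzall : forall j, (j <= k - 1)%nat -> zz j = RtoC 0).
  { intros j Hj. destruct j as [|j]. exact Hzz0. rewrite HzzS by lia. rewrite Hxall by lia. ceq. }
  assert (Hall : forall r, (r < 2 * k)%nat -> a r = RtoC 0).
  { intros r Hr. destruct (parity r) as [q [[E _]|[E _]]]; subst r.
    - rewrite HA0, Hxall, Hzall by lia. ring.
    - rewrite HA1, Hxall, Hzall by lia. ring. }
  assert (HB1z : B1 = RtoC 0).
  { apply (Bzero1 n xi c Hn Hxn Hc2 Hc). rewrite HB1 at 1.
    change (ut 0%nat 0) with (a 0%nat). change (ut 1%nat 0) with (a 1%nat).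
    rewrite !Hall by lia. reflexivity. }
  assert (HB2z : B2 = RtoC 0).
  { apply (Bzero2 n xi c Hn Hxn Hc2 Hc). rewrite HB2 at 1.
    change (ut (2 * k - 2)%nat 0) with (a (2 * k - 2)%nat). change (ut (2 * k - 1)%nat 0) with (a (2 * k - 1)%nat).
    rewrite !Hall by lia. reflexivity. }
  assert (Hexp0 : forall q kk, expd (RtoC 0) (bco c q kk (RtoC 0)) c = fun _ => RtoC 0).
  { intros q kk. apply functional_extensionality. intros s. unfold expd, bco. destruct q, kk. ceq. }
  intros m t Hm Ht.
  rewrite <- (extu_eq k u m Hm). fold ut.
  destruct (Nat.lt_ge_cases m 2) as [Hm2|Hm2].
  - destruct m as [|[|m]]; try lia.
    + rewrite W0 by auto. change (ut 0%nat 0) with (a 0%nat). rewrite Hall, HB1z, Hexp0 by lia. reflexivity.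
    + rewrite W1 by auto. change (ut 1%nat 0) with (a 1%nat). rewrite Hall, HB1z, Hexp0 by lia. reflexivity.
  - destruct (Nat.le_gt_cases m (2 * k - 3)) as [Hm3|Hm3].
    + rewrite HMid by auto. change (ut m 0) with (a m). rewrite Hall by lia.
      unfold expd. ceq.
    + destruct (Nat.eq_dec m (2 * k - 2)) as [->|Hne].
      * rewrite W2 by auto. change (ut (2 * k - 2)%nat 0) with (a (2 * k - 2)%nat). rewrite Hall, HB2z, Hexp0 by lia. reflexivity.
      * replace m with (2 * k - 1)%nat by lia.
        rewrite W3 by auto. change (ut (2 * k - 1)%nat 0) with (a (2 * k - 1)%nat). rewrite Hall, HB2z, Hexp0 by lia. reflexivity.
Qed.
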